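(* Let $D$ be a countable solid digraph. Then the following are equivalent: (i) $D$ is strongly connected; (ii) there is a closed directed topological path in $|D|$ whose image contains all the vertices of $D$.
   Context: Digraphs have no loops and no parallel edges. $\mathcal{X}(D)$: finite subsets of $V(D)$. $D$ is solid if $D-X$ has only finitely many strong components for every $X\in\mathcal{X}(D)$. Ends and limit edges: rays are one-way infinite directed paths, tails are subrays; a ray is solid if for each $X\in\mathcal{X}(D)$ it has a tail in a strong component of $D-X$; solid rays are equivalent if for each $X$ they have tails in the same strong component; classes are ends, $\Omega(D)$. $C(X,\omega)$: strong component of $D-X$ containing tails of rays of $\omega$ ($\omega$ lives in it); $X$ separates ends $\omega,\eta$ if $C(X,\omega)\ne C(X,\eta)$. For distinct ends, $(\omega,\eta)$ is a limit edge (tail $\omega$, head $\eta$) if for each $X$ separating them $D$ has an edge from $C(X,\omega)$ to $C(X,\eta)$; for a vertex $v$, $(v,\omega)$ (resp. $(\omega,v)$) is a limit edge if $D$ has an edge from $v$ to $C(X,\omega)$ (resp. from $C(X,\omega)$ to $v$) for all $X$ with $v\notin C(X,\omega)$. $\Lambda(D)$: limit edges. $|D|$: from $V(D)\cup\Omega(D)$ and copies $[0,1]_e$, $e\in E(D)\cup\Lambda(D)$, identify the tail of $e$ with $0$ and head with $1$ (the edges of $|D|$); points on different edges correspond if they come from the same real. A limit edge lives in a strong component $C$ of $D-X$ if each endpoint is a vertex of or an end living in $C$. Topology generated by: (1) open $\varepsilon$-stars around vertices; (2) open subintervals of interiors of edges of $D$; (3) for an end $\omega$ and $X\in\mathcal{X}(D)$,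 $\hat C_\varepsilon(X,\omega)$: vertices and inner points of edges of $C(X,\omega)$, ends living in $C(X,\omega)$, points of limit edges living in $C(X,\omega)$, and for each edge of $E(D)\cup\Lambda(D)$ with exactly one endpoint $y$ a vertex of/end living in $C(X,\omega)$, the half-open segment of length $\varepsilon$ at $y$; (4) for an inner point $z$ of a limit edge $(\omega,\eta)$ and $X$ separating $\omega,\eta$: union of open $\varepsilon$-intervals around points corresponding to $z$ on all edges of $D$ from $C(X,\omega)$ to $C(X,\eta)$ and on limit edges with tail a vertex of/end living in $C(X,\omega)$ and head a vertex of/end living in $C(X,\eta)$; for $(v,\omega)$ with $v\in X$ analogously over edges of $D$ from $v$ to $C(X,\omega)$ and limit edges $(v,\omega')$, $\omega'$ living in $C(X,\omega)$; symmetrically for $(\omega,v)$. A directed topological path is a continuous $\alpha\colon[0,1]\to|D|$ such that for every $x\in(0,1)$ mapped to an inner point of an edge $e$ of $|D|$ there is a neighbourhood $(a,b)$ of $x$ on which $\alpha$ is a homeomorphism onto the interior of $e$, and on each such $[a,b]$ it is order preserving with respect to $[0,1]_e$. It is closed if $\alpha(0)=\alpha(1)$. *)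

(* Defs.v *)
From Stdlib Require Import Reals Lra List.
Open Scope R_scope.

Set Implicit Arguments.

Section Digraph.
(* A digraph: vertex type V, edge relation E (no parallel edges by
   construction; loops excluded by the hypothesis of the theorem). *)
Context {V : Type} (E : V -> V -> Prop).

Definition finite_set (X : V -> Prop) : Prop :=
  exists l : list V, forall v, X v -> In v l.

Inductive reach (X : V -> Prop) : V -> V -> Prop :=
| reach_refl v : ~ X v -> reach X v v
| reach_step u v w : ~ X u -> E u v -> reach X v w -> reach X u w.

Definition sc (X : V -> Prop) (u v : V) : Prop := reach X u v /\ reach X v u.

Definition no_vertices : V -> Prop := fun _ => False.

Definition strongly_connected : Prop :=
  (exists v : V, True) /\ forall u v, reach no_vertices u v.

Definition is_scomp (X : V -> Prop) (C : V -> Prop) : Prop :=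
  exists c, ~ X c /\ forall v, C v <-> sc X c v.

(* D is solid: D - X has finitely many strong components for finite X *)
Definition solid : Prop :=
  forall X, finite_set X ->
    exists l : list V, forall v, ~ X v -> exists c, In c l /\ sc X c v.

Definition countable_vertices : Prop :=
  exists f : V -> nat, forall u v, f u = f v -> u = v.

Definition ray (r : nat -> V) : Prop :=
  (forall m n, r m = r n -> m = n) /\ forall n, E (r n) (r (S n)).

Definition tail_in (r : nat -> V) (C : V -> Prop) : Prop :=
  exists k, forall n, (k <= n)%nat -> C (r n).

Definition solid_ray (r : nat -> V) : Prop :=
  ray r /\ forall X, finite_set X -> exists C, is_scomp X C /\ tail_in r C.

Definition equiv_rays (r r' : nat -> V) : Prop :=
  forall X, finite_set X -> exists C, is_scomp X C /\ tail_in r C /\ tail_in r' C.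

Definition is_end (w : (nat -> V) -> Prop) : Prop :=
  exists r0, solid_ray r0 /\ forall r, w r <-> (solid_ray r /\ equiv_rays r0 r).

Definition lives (X : V -> Prop) (w : (nat -> V) -> Prop) (C : V -> Prop) : Prop :=
  is_scomp X C /\ forall r, w r -> tail_in r C.

Definition same_set (A B : V -> Prop) : Prop := forall v, A v <-> B v.

Definition limit_ee (w w' : (nat -> V) -> Prop) : Prop :=
  forall X, finite_set X -> forall C1 C2, lives X w C1 -> lives X w' C2 ->
    ~ same_set C1 C2 -> exists u v, C1 u /\ C2 v /\ E u v.

Definition limit_ve (v : V) (w : (nat -> V) -> Prop) : Prop :=
  forall X, finite_set X -> forall C, lives X w C -> ~ C v ->
    exists u, C u /\ E v u.

Definition limit_ev (w : (nat -> V) -> Prop) (v : V) : Prop :=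
  forall X, finite_set X -> forall C, lives X w C -> ~ C v ->
    exists u, C u /\ E u v.

Inductive node : Type :=
| NV : V -> node
| NE : ((nat -> V) -> Prop) -> node.

Definition valid_node (n : node) : Prop :=
  match n with NV _ => True | NE w => is_end w end.

Definition dedge (x y : node) : Prop :=
  match x, y with
  | NV u, NV v => E u v
  | NV v, NE w => is_end w /\ limit_ve v w
  | NE w, NV v => is_end w /\ limit_ev w v
  | NE w, NE w' => is_end w /\ is_end w' /\ w <> w' /\ limit_ee w w'
  end.

(* points of |D|: nodes, and inner points PI x y r (0<r<1) of edges (x,y);
   the points 0 and 1 of [0,1]_e are identified with the tail and head *)
Inductive point : Type :=
| PN : node -> point
| PI : node -> node -> R -> point.

Definition valid_point (p : point) : Prop :=
  match p with
  | PN n => valid_node n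
  | PI x y r => dedge x y /\ 0 < r < 1
  end.

Definition node_in (X : V -> Prop) (C : V -> Prop) (n : node) : Prop :=
  match n with
  | NV v => C v
  | NE w => is_end w /\ lives X w C
  end.

Definition star (v : V) (eps : R) : point -> Prop := fun p =>
  p = PN (NV v)
  \/ (exists y r, p = PI (NV v) y r /\ dedge (NV v) y /\ 0 < r < eps)
  \/ (exists x r, p = PI x (NV v) r /\ dedge x (NV v) /\ 1 - eps < r < 1).

Definition edge_interval (u v : V) (a b : R) : point -> Prop := fun p =>
  exists r, p = PI (NV u) (NV v) r /\ a < r < b.

(* (3) \hat C_eps(X, omega), with C = C(X, omega) *)
Definition Chat (X C : V -> Prop) (eps : R) : point -> Prop := fun p =>
  (exists n, p = PN n /\ node_in X C n)
  \/ (exists x y r, p = PI x y r /\ dedge x y /\ 0 < r < 1 /\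
       ((node_in X C x /\ node_in X C y)
        \/ (node_in X C x /\ ~ node_in X C y /\ r < eps)
        \/ (~ node_in X C x /\ node_in X C y /\ 1 - eps < r))).

Definition limit_nbhd (X C1 C2 : V -> Prop) (z eps : R) : point -> Prop := fun p =>
  exists x y r, p = PI x y r /\ dedge x y /\
    node_in X C1 x /\ node_in X C2 y /\ Rabs (r - z) < eps.

Definition limit_nbhd_from (X : V -> Prop) (v : V) (C : V -> Prop) (z eps : R)
  : point -> Prop := fun p =>
  exists y r, p = PI (NV v) y r /\ dedge (NV v) y /\
    node_in X C y /\ Rabs (r - z) < eps.

Definition limit_nbhd_to (X : V -> Prop) (C : V -> Prop) (v : V) (z eps : R)
  : point -> Prop := fun p =>
  exists x r, p = PI x (NV v) r /\ dedge x (NV v) /\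
    node_in X C x /\ Rabs (r - z) < eps.

Definition subbase (U : point -> Prop) : Prop :=
  (exists v eps, 0 < eps /\ U = star v eps)
  \/ (exists u v a b, E u v /\ 0 <= a < b /\ b <= 1 /\ U = edge_interval u v a b)
  \/ (exists X w C eps, finite_set X /\ is_end w /\ lives X w C /\ 0 < eps /\
        U = Chat X C eps)
  \/ (exists X w w' C1 C2 z eps, dedge (NE w) (NE w') /\ 0 < z < 1 /\
        finite_set X /\ lives X w C1 /\ lives X w' C2 /\ ~ same_set C1 C2 /\
        0 < eps /\ U = limit_nbhd X C1 C2 z eps)
  \/ (exists X v w C z eps, dedge (NV v) (NE w) /\ 0 < z < 1 /\
        finite_set X /\ X v /\ lives X w C /\ 0 < eps /\
        U = limit_nbhd_from X v C z eps)
  \/ (exists X w v C z eps, dedge (NE w) (NV v) /\ 0 < z < 1 /\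
        finite_set X /\ X v /\ lives X w C /\ 0 < eps /\
        U = limit_nbhd_to X C v z eps).

Definition openD (U : point -> Prop) : Prop :=
  forall p, valid_point p -> U p ->
    exists l : list (point -> Prop),
      Forall subbase l /\ Forall (fun W => W p) l /\
      forall q, valid_point q -> Forall (fun W => W q) l -> U q.

Definition open_in (A S : R -> Prop) : Prop :=
  forall t, A t -> S t ->
    exists d, 0 < d /\ forall s, A s -> Rabs (s - t) < d -> S s.

Definition unit_interval : R -> Prop := fun t => 0 <= t <= 1.

Definition continuous_path (alpha : R -> point) : Prop :=
  (forall t, unit_interval t -> valid_point (alpha t)) /\
  forall U, openD U ->
    open_in unit_interval (fun t => unit_interval t /\ U (alpha t)).

Definition edge_coord (x y : node) (p : point) (c : R) : Prop :=
  (p = PN x /\ c = 0) \/ (p = PN y /\ c = 1) \/ (p = PI x y c /\ 0 < c < 1).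

Definition homeo_onto_edge (alpha : R -> point) (a b : R) (x y : node) : Prop :=
  (forall t, a < t < b -> exists s, 0 < s < 1 /\ alpha t = PI x y s)
  /\ (forall s, 0 < s < 1 -> exists t, a < t < b /\ alpha t = PI x y s)
  /\ (forall t t', a < t < b -> a < t' < b -> alpha t = alpha t' -> t = t')
  /\ (forall U, openD U ->
        open_in (fun t => a < t < b) (fun t => a < t < b /\ U (alpha t)))
  /\ (forall S, open_in (fun t => a < t < b) S ->
        exists U, openD U /\ forall s, 0 < s < 1 ->
          (U (PI x y s) <-> exists t, a < t < b /\ S t /\ alpha t = PI x y s)).

Definition order_preserving_on (alpha : R -> point) (a b : R) (x y : node) : Prop :=
  forall t t', a <= t -> t <= t' -> t' <= b ->
    exists c c', edge_coord x y (alpha t) c /\ edge_coord x y (alpha t') c' /\ c <= c'.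

Definition directed_top_path (alpha : R -> point) : Prop :=
  continuous_path alpha /\
  forall t x y r, 0 < t < 1 -> alpha t = PI x y r ->
    exists a b, 0 <= a < t /\ t < b <= 1 /\
      homeo_onto_edge alpha a b x y /\ order_preserving_on alpha a b x y.

Definition closed_path (alpha : R -> point) : Prop := alpha 0 = alpha 1.

End Digraph.

(* Main.v *)
From Stdlib Require Import Reals Lra Lia List Classical ClassicalEpsilon.
Require Import Defs.
Open Scope R_scope.
Set Implicit Arguments.

Section Basic.
Context {V : Type} (E : V -> V -> Prop).

Lemma reach_notX_l X u v : reach E X u v -> ~ X u.
Proof. intros H; destruct H; auto. Qed.

Lemma reach_notX_r X u v : reach E X u v -> ~ X v.
Proof. intros H; induction H; auto. Qed.

Lemma reach_trans X u v w : reach E X u v -> reach E X v w -> reach E X u w.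
Proof. intros H; induction H; intros; auto. eapply reach_step; eauto. Qed.

Lemma reach_mono (X X' : V -> Prop) u v :
  (forall x, X' x -> X x) -> reach E X u v -> reach E X' u v.
Proof. intros HX H; induction H. constructor; auto. eapply reach_step; eauto. Qed.

Lemma reach_edge X u v : ~ X u -> ~ X v -> E u v -> reach E X u v.
Proof. intros; eapply reach_step; eauto. constructor; auto. Qed.

Lemma sc_refl X u : ~ X u -> sc E X u u.
Proof. split; constructor; auto. Qed.
Lemma sc_sym X u v : sc E X u v -> sc E X v u.
Proof. intros [? ?]; split; auto. Qed.
Lemma sc_trans X u v w : sc E X u v -> sc E X v w -> sc E X u w.
Proof. intros [? ?] [? ?]; split; eapply reach_trans; eauto. Qed.
Lemma sc_mono (X X' : V -> Prop) u v :
  (forall x, X' x -> X x) -> sc E X u v -> sc E X' u v.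
Proof. intros HX [? ?]; split; eapply reach_mono; eauto. Qed.
Lemma sc_notX_l X u v : sc E X u v -> ~ X u.
Proof. intros [H _]; eapply reach_notX_l; eauto. Qed.
Lemma sc_notX_r X u v : sc E X u v -> ~ X v.
Proof. intros [H _]; eapply reach_notX_r; eauto. Qed.

Fixpoint chain (x : V) (l : list V) : Prop :=
  match l with nil => True | y :: l' => E x y /\ chain y l' end.

Lemma last_cons (x a : V) l : last (a :: l) x = last l a.
Proof. revert x a; induction l as [|b l IH]; intros x a; auto.
  change (last (b :: l) x = last (b :: l) a). rewrite !IH; auto. Qed.

Lemma chain_app x l1 l2 : chain x l1 -> chain (last l1 x) l2 -> chain x (l1 ++ l2).
Proof. revert x; induction l1 as [|a l1 IH]; simpl; intros x H1 H2; auto.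
  destruct H1 as [Ha H1]; split; auto. apply IH; auto.
  rewrite <- (last_cons x). auto. Qed.

Lemma last_app (x : V) l1 l2 : last (l1 ++ l2) x = last l2 (last l1 x).
Proof. revert x; induction l1 as [|a l1 IH]; intros x; auto.
  rewrite <- app_comm_cons, (last_cons x a (l1 ++ l2)), IH, last_cons. auto. Qed.

Lemma last_in (x : V) l : In (last l x) (x :: l).
Proof. revert x; induction l; intros x. simpl; auto.
  rewrite last_cons. destruct (IHl a); simpl; auto. Qed.

Lemma reach_chain X u v : reach E X u v ->
  exists l, chain u l /\ last l u = v /\ (forall z, In z (u :: l) -> ~ X z).
Proof. intros H; induction H.
  - exists nil; simpl; repeat split; auto. intros z [<-|[]]; auto.
  - destruct IHreach as [l [Hc [Hl Hn]]]. exists (v :: l). split; [split; auto|split].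
    rewrite last_cons; auto.
    intros z [<-|Hz]; auto. Qed.

Lemma chain_reach X u l : chain u l -> (forall z, In z (u :: l) -> ~ X z) ->
  forall z, In z (u :: l) -> reach E X u z /\ reach E X z (last l u).
Proof. revert u; induction l as [|a l IH]; intros u Hc Hn z Hz.
  - destruct Hz as [<-|[]]. split; constructor; apply Hn; simpl; auto.
  - simpl in Hc. destruct Hc as [Hua Hc].
    assert (Ha : reach E X u a) by (apply reach_edge; auto; apply Hn; simpl; auto).
    assert (IH' := IH a Hc (fun z Hz => Hn z (or_intror Hz))).
    rewrite last_cons.
    destruct Hz as [<-|Hz].
    + split. constructor; apply Hn; simpl; auto. eapply reach_trans; eauto. apply (IH' a (or_introl eq_refl)).
    + destruct (IH' z Hz); split; auto. eapply reach_trans; eauto. Qed.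

Lemma closed_walk X u (L : list V) : ~ X u ->
  exists l, chain u l /\ last l u = u /\ (forall z, In z (u :: l) -> ~ X z) /\
    (forall y, In y L -> sc E X u y -> In y (u :: l)).
Proof. intros Hu. induction L as [|y L IH].
  - exists nil; simpl; repeat split; auto. intros z [<-|[]]; auto.
  - destruct IH as [l [Hc [Hl [Hn Hcov]]]].
    destruct (classic (sc E X u y)) as [Hy|Hy].
    + destruct Hy as [Huy Hyu].
      destruct (reach_chain Huy) as [l1 [Hc1 [Hl1 Hn1]]].
      destruct (reach_chain Hyu) as [l2 [Hc2 [Hl2 Hn2]]].
      exists (l1 ++ l2 ++ l). repeat split.
      * apply chain_app; auto. rewrite Hl1. apply chain_app; auto. rewrite Hl2; auto.
      * rewrite !last_app, Hl1, Hl2; auto.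
      * intros z Hz. simpl in Hz. destruct Hz as [<-|Hz]. auto.
        apply in_app_or in Hz; destruct Hz as [Hz|Hz]. apply Hn1; simpl; auto.
        apply in_app_or in Hz; destruct Hz as [Hz|Hz]. apply Hn2; simpl; auto. apply Hn; simpl; auto.
      * intros z [<-|Hz] Hz'.
        { assert (H := last_in u l1). rewrite Hl1 in H. destruct H as [H|H]; [left; auto|].
          right; apply in_or_app; auto. }
        { destruct (Hcov z Hz Hz') as [H|H]; [left; auto|].
          right; apply in_or_app; right; apply in_or_app; auto. }
    + exists l; repeat split; auto. intros z [<-|Hz] Hz'. contradiction. auto.
Qed.
End Basic.

Section Pick.
Context {V : Type} (E : V -> V -> Prop).

Inductive seg := SNode (u : V) (s e : R) | SEdge (u v : V) (a b : R).

Fixpoint pick (w : V) (l : list V) (s L t : R) : seg :=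
  match l with
  | nil => SNode w s (s + L)
  | w' :: l' =>
      if Rle_dec t (s + L) then SNode w s (s + L)
      else if Rlt_dec t (s + 2 * L) then SEdge w w' (s + L) (s + 2 * L)
      else pick w' l' (s + 2 * L) L t
  end.

Definition T (l : list V) : R := INR (2 * length l + 1).

Lemma T_cons a l : T (a :: l) = T l + 2.
Proof. unfold T. simpl length. replace (2 * S (length l) + 1)%nat with (S (S (2 * length l + 1))) by lia.
  rewrite !S_INR. lra. Qed.

Lemma T_ge1 l : 1 <= T l.
Proof. unfold T. rewrite plus_INR. simpl (INR 1). assert (0 <= INR (2 * length l)) by apply pos_INR. lra. Qed.

Lemma pick_start w l s L : 0 < L -> pick w l s L s = SNode w s (s + L).
Proof. destruct l; simpl; auto. intros. destruct (Rle_dec s (s + L)); auto. lra. Qed.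

Lemma pick_end w l s L t : 0 < L -> t = s + T l * L -> pick w l s L t = SNode (last l w) (t - L) t.
Proof. revert w s; induction l as [|a l IH]; intros w s HL Ht.
  - simpl. unfold T in Ht; simpl in Ht. f_equal; lra.
  - rewrite T_cons in Ht. assert (H1 := T_ge1 l). simpl pick.
    destruct (Rle_dec t (s + L)). nra. destruct (Rlt_dec t (s + 2 * L)). nra.
    rewrite last_cons. apply IH; auto. lra. Qed.

Lemma pick_prop w l s L t : 0 < L -> chain E w l -> s <= t <= s + T l * L ->
 match pick w l s L t with
 | SNode x a b => b = a + L /\ s <= a <= t /\ t <= b <= s + T l * L /\ In x (w :: l) /\
     (a = s \/ s + 2 * L <= a) /\
     (forall t', a <= t' <= b -> pick w l s L t' = SNode x a b) /\
     (a = s -> x = w) /\ (b = s + T l * L -> x = last l w) /\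
     (s < a -> exists y, E y x /\ In y (w :: l) /\ forall t', a - L < t' < a -> pick w l s L t' = SEdge y x (a - L) a) /\
     (b < s + T l * L -> b + 2 * L <= s + T l * L /\ exists y, E x y /\ In y (w :: l) /\ forall t', b < t' < b + L -> pick w l s L t' = SEdge x y b (b + L))
 | SEdge x y a b => b = a + L /\ s + L <= a /\ a < t < b /\ b + L <= s + T l * L /\ E x y /\
     In x (w :: l) /\ In y (w :: l) /\
     (forall t', a < t' < b -> pick w l s L t' = SEdge x y a b) /\
     pick w l s L a = SNode x (a - L) a /\ pick w l s L b = SNode y b (b + L)
 end.
Proof. revert w s t; induction l as [|w' l IH]; intros w s t HL Hc Ht.
  - simpl. unfold T in *; simpl in *. repeat split; try lra; auto.
    all: try (intros; exfalso; lra).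
  - rewrite T_cons in *. assert (H1 := T_ge1 l). simpl in Hc. destruct Hc as [Hww' Hc].
    simpl pick at 1.
    destruct (Rle_dec t (s + L)) as [Ha|Ha].
    + repeat split; try lra; simpl; auto.
      * nra.
      * intros t' Ht'. simpl. destruct (Rle_dec t' (s + L)); auto. lra.
      * intros; nra.
      * nra.
      * exists w'. repeat split; simpl; auto. intros t' Ht'. simpl.
        destruct (Rle_dec t' (s + L)). lra. destruct (Rlt_dec t' (s + 2 * L)). f_equal; lra. lra.
    + destruct (Rlt_dec t (s + 2 * L)) as [Hb|Hb].
      * repeat split; try lra; simpl; auto.
        -- nra.
        -- intros t' Ht'. destruct (Rle_dec t' (s + L)). lra. destruct (Rlt_dec t' (s + 2 * L)). auto. lra.
        -- destruct (Rle_dec (s + L) (s + L)). f_equal; lra. lra.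
        -- destruct (Rle_dec (s + 2 * L) (s + L)). lra. destruct (Rlt_dec (s + 2 * L) (s + 2 * L)). lra.
           apply pick_start; auto.
      * assert (Ht' : s + 2 * L <= t <= s + 2 * L + T l * L) by lra.
        specialize (IH w' (s + 2 * L) t HL Hc Ht').
        assert (Hrec : forall t', s + 2 * L <= t' -> pick w (w' :: l) s L t' = pick w' l (s + 2 * L) L t').
        { intros t' H'. simpl. destruct (Rle_dec t' (s + L)). lra. destruct (Rlt_dec t' (s + 2 * L)). lra. auto. }
        destruct (pick w' l (s + 2 * L) L t) as [x a b|x y a b] eqn:Hp.
        -- destruct IH as (Hb' & Ha1 & Hb1 & Hin & Has & Hcons & Hfirst & Hlast & Hleft & Hright).
           repeat split; try lra.
           ++ simpl; simpl in Hin; tauto.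
           ++ intros t' Ht''. rewrite Hrec by lra. auto.
           ++ intros Hbe. rewrite last_cons. apply Hlast. lra.
           ++ intros Hsa. destruct Has as [Has|Has].
              ** subst a. rewrite (Hfirst eq_refl). exists w. repeat split; simpl; auto.
                 intros t' Ht''. simpl. destruct (Rle_dec t' (s + L)). lra.
                 destruct (Rlt_dec t' (s + 2 * L)). f_equal; lra. lra.
              ** destruct (Hleft ltac:(lra)) as [y [Hy [Hiny Hy']]]. exists y. repeat split; auto.
                 simpl; simpl in Hiny; tauto.
                 intros t' Ht''. rewrite Hrec by lra. auto.
           ++ destruct (Hright ltac:(lra)) as [Hb2 [y [Hy [Hiny Hy']]]]. exists y. repeat split; auto.
              simpl; simpl in Hiny; tauto.
              intros t' Ht''. rewrite Hrec by lra. auto.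
        -- destruct IH as (Hb' & Ha1 & Hab & Hb1 & Hxy & Hinx & Hiny & Hcons & Hpa & Hpb).
           repeat split; try lra; auto.
           ++ simpl; simpl in Hinx; tauto.
           ++ simpl; simpl in Hiny; tauto.
           ++ intros t' Ht''. rewrite Hrec by lra. auto.
           ++ rewrite Hrec by lra. auto.
           ++ rewrite Hrec by lra. auto.
Qed.

Lemma pick_cov w l s L x : 0 < L -> In x (w :: l) ->
  exists t, s <= t <= s + T l * L /\ exists a b, pick w l s L t = SNode x a b.
Proof. revert w s; induction l as [|w' l IH]; intros w s HL Hx.
  - destruct Hx as [<-|[]]. exists s. unfold T; simpl. split. lra. eauto.
  - destruct Hx as [<-|Hx].
    + exists s. split. assert (H1 := T_ge1 (w' :: l)). nra. rewrite pick_start; eauto.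
    + destruct (IH w' (s + 2 * L) HL Hx) as [t [Ht Hp]]. exists t. rewrite T_cons. split. lra.
      simpl. destruct (Rle_dec t (s + L)). lra. destruct (Rlt_dec t (s + 2 * L)). lra. auto.
Qed.
End Pick.

Section Constr.
Context {V : Type} (E : V -> V -> Prop) (v0 : V) (f : V -> nat)
  (finj : forall u v, f u = f v -> u = v) (hsolid : solid E)
  (hsc : forall u v, reach E no_vertices u v).

Definition Xn (n : nat) (v : V) : Prop := (0 < n)%nat /\ (v = v0 \/ (f v < n)%nat).

Lemma Xn_mono n m v : (n <= m)%nat -> Xn n v -> Xn m v.
Proof. unfold Xn; intros H [H1 [H2|H2]]; split; try lia; auto. Qed.

Lemma Xn_S n v : Xn n v -> Xn (S n) v.
Proof. apply Xn_mono; lia. Qed.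

Lemma Xn_self v : Xn (S (f v)) v.
Proof. unfold Xn; split. lia. right; lia. Qed.

Lemma Xn_0 v : ~ Xn 0 v.
Proof. unfold Xn; lia. Qed.

Lemma fbelow n : exists l, forall v, (f v < n)%nat -> In v l.
Proof. induction n as [|n [l Hl]].
  - exists nil; intros; lia.
  - destruct (classic (exists v, f v = n)) as [[x Hx]|Hn].
    + exists (x :: l). intros v Hv. destruct (Nat.eq_dec (f v) n) as [e|e].
      left. apply finj; lia. right; apply Hl; lia.
    + exists l. intros v Hv. apply Hl. destruct (Nat.eq_dec (f v) n); [|lia].
      exfalso; apply Hn; eauto.
Qed.

Lemma Xn_fin n : finite_set (Xn n).
Proof. destruct (fbelow n) as [l Hl]. exists (v0 :: l). intros v [_ [H|H]].
  left; auto. right; auto. Qed.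

Lemma Xn_cover (X : V -> Prop) : finite_set X -> exists n, forall v, X v -> Xn n v.
Proof. intros [l Hl].
  assert (H : exists n, forall v, In v l -> Xn n v).
  { clear Hl. induction l as [|a l [n Hn]].
    - exists 0%nat; intros _ [].
    - exists (Nat.max n (S (f a))). intros v [<-|Hv].
      + eapply Xn_mono; [|apply Xn_self]; lia.
      + eapply Xn_mono; [|apply Hn; auto]; lia. }
  destruct H as [n Hn]; exists n; auto. Qed.

Lemma reach_X0 u v : reach E (Xn 0) u v.
Proof. eapply reach_mono; [|apply hsc]. intros x Hx; apply (Xn_0 Hx). Qed.

Definition wspec n u (l : list V) : Prop :=
  chain E u l /\ last l u = u /\ (forall z, In z (u :: l) -> ~ Xn n z) /\
  (forall y, Xn (S n) y -> sc E (Xn n) u y -> In y (u :: l)) /\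
  (forall y, ~ Xn (S n) y -> sc E (Xn n) u y -> exists z, In z (u :: l) /\ sc E (Xn (S n)) z y).

Lemma wspec_ex n u : ~ Xn n u -> exists l, wspec n u l.
Proof. intros Hu.
  destruct (Xn_fin (S n)) as [lX HX].
  destruct (hsolid (Xn_fin (S n))) as [lr Hr].
  destruct (closed_walk E (Xn n) u (lX ++ lr) Hu) as [l [Hc [Hl [Hn Hcov]]]].
  exists l. repeat split; auto.
  - intros y Hy Hsy. apply Hcov; auto. apply in_or_app; left; auto.
  - intros y Hy Hsy. destruct (Hr y Hy) as [c [Hc1 Hc2]]. exists c. split; auto.
    apply Hcov. apply in_or_app; right; auto.
    eapply sc_trans; eauto. apply sc_sym. eapply sc_mono; [|eauto]. apply Xn_S.
Qed.

Definition wl n u : list V := epsilon (inhabits nil) (wspec n u).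

Lemma wl_spec n u : ~ Xn n u -> wspec n u (wl n u).
Proof. intros Hu. unfold wl. apply epsilon_spec. apply wspec_ex; auto. Qed.

Lemma wl_sc n u z : ~ Xn n u -> In z (u :: wl n u) -> sc E (Xn n) u z.
Proof. intros Hu Hz. destruct (wl_spec Hu) as [Hc [Hl [Hn _]]].
  destruct (chain_reach E (Xn n) Hc Hn Hz) as [H1 H2]. rewrite Hl in H2. split; auto. Qed.

Definition Lof n u s e : R := (e - s) / T (wl n u).

Fixpoint loc (n : nat) (t : R) : @seg V :=
  match n with
  | O => SNode v0 0 1
  | S n' =>
    match loc n' t with
    | SEdge x y a b => SEdge x y a b
    | SNode u s e =>
      if excluded_middle_informative (Xn n' u) then SNode u s e
      else pick u (wl n' u) s (Lof n' u s e) t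
    end
  end.

Definition Inv n : Prop := forall t, 0 <= t <= 1 ->
  match loc n t with
  | SNode u s e => 0 <= s <= t /\ t <= e <= 1 /\ s < e /\
      (forall t', s <= t' <= e -> loc n t' = SNode u s e) /\
      (0 < s -> exists a y, a < s /\ E y u /\ forall t', a < t' < s -> loc n t' = SEdge y u a s) /\
      (e < 1 -> exists b y, e < b /\ E u y /\ forall t', e < t' < b -> loc n t' = SEdge u y e b)
  | SEdge x y a b => 0 <= a < t /\ t < b <= 1 /\ E x y /\
      (forall t', a < t' < b -> loc n t' = SEdge x y a b) /\
      (exists s, loc n a = SNode x s a) /\ (exists e, loc n b = SNode y b e)
  end.

Lemma T_pos (l : list V) : 0 < T l.
Proof. assert (H := T_ge1 l). lra. Qed.

Lemma Lof_pos n u s e : s < e -> 0 < Lof n u s e.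
Proof. intros H. unfold Lof. apply Rdiv_lt_0_compat. lra. apply T_pos. Qed.

Lemma Lof_span n u s e : s + T (wl n u) * Lof n u s e = e.
Proof. unfold Lof. assert (H := T_pos (wl n u)). field. lra. Qed.

Lemma loc_S_node n t u s e : loc n t = SNode u s e ->
  loc (S n) t = if excluded_middle_informative (Xn n u) then SNode u s e
      else pick u (wl n u) s (Lof n u s e) t.
Proof. intros H; simpl; rewrite H; auto. Qed.

Lemma loc_S_edge n t x y a b : loc n t = SEdge x y a b -> loc (S n) t = SEdge x y a b.
Proof. intros H; simpl; rewrite H; auto. Qed.

Lemma node_right_end n t u s e : Inv n -> 0 <= t <= 1 -> loc n t = SNode u s e ->
  exists s', loc (S n) e = SNode u s' e.
Proof. intros HI Ht H. assert (HI' := HI t Ht). rewrite H in HI'.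
  destruct HI' as (H1 & H2 & H3 & Hcons & _).
  rewrite (loc_S_node n e (Hcons e ltac:(lra))).
  destruct (excluded_middle_informative (Xn n u)) as [Hx|Hx]. eauto.
  destruct (wl_spec Hx) as [Hc [Hl _]].
  rewrite pick_end. rewrite Hl. eauto. apply Lof_pos; auto. rewrite Lof_span; auto. Qed.

Lemma node_left_end n t u s e : Inv n -> 0 <= t <= 1 -> loc n t = SNode u s e ->
  exists e', loc (S n) s = SNode u s e'.
Proof. intros HI Ht H. assert (HI' := HI t Ht). rewrite H in HI'.
  destruct HI' as (H1 & H2 & H3 & Hcons & _).
  rewrite (loc_S_node n s (Hcons s ltac:(lra))).
  destruct (excluded_middle_informative (Xn n u)) as [Hx|Hx]. eauto.
  rewrite pick_start. eauto. apply Lof_pos; auto. Qed.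

Lemma Inv_all n : Inv n.
Proof. induction n as [|n IH].
  - intros t Ht. simpl. repeat split; try lra; auto. all: intros; lra.
  - intros t Ht. assert (HI := IH t Ht).
    destruct (loc n t) as [u s e|x y a b] eqn:Hlt.
    + destruct HI as (Hs & He & Hse & Hcons & Hleft & Hright).
      assert (Hlocs : forall t', s <= t' <= e -> loc (S n) t' =
         if excluded_middle_informative (Xn n u) then SNode u s e
         else pick u (wl n u) s (Lof n u s e) t').
      { intros t' Ht'. apply loc_S_node. apply Hcons; auto. }
      assert (Hedge : forall x y a b, (forall t', a < t' < b -> loc n t' = SEdge x y a b) ->
                 forall t', a < t' < b -> loc (S n) t' = SEdge x y a b).
      { intros x y a b Hxy t' Ht'. apply loc_S_edge; auto. }
      rewrite (Hlocs t) by lra.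
      destruct (excluded_middle_informative (Xn n u)) as [Hx|Hx].
      * repeat split; try lra.
        -- intros t' Ht'. rewrite Hlocs by auto.
           destruct (excluded_middle_informative (Xn n u)); [auto|contradiction].
        -- intros H0. destruct (Hleft H0) as [a [y [Ha [Hy Hay]]]]. exists a, y; repeat split; auto.
        -- intros H0. destruct (Hright H0) as [b [y [Hb [Hy Hby]]]]. exists b, y; repeat split; auto.
      * set (L := Lof n u s e). assert (HL : 0 < L) by (apply Lof_pos; auto).
        assert (Hspan : s + T (wl n u) * L = e) by apply Lof_span.
        destruct (wl_spec Hx) as [Hc [Hl _]].
        assert (Hp := @pick_prop V E u (wl n u) s L t HL Hc ltac:(lra)).
        assert (Hlocs' : forall t', s <= t' <= e -> loc (S n) t' = pick u (wl n u) s L t').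
        { intros t' Ht'. rewrite Hlocs by auto. destruct (excluded_middle_informative (Xn n u)); [contradiction|auto]. }
        rewrite Hspan in Hp.
        destruct (pick u (wl n u) s L t) as [x a b|x y a b] eqn:Hpt.
        -- destruct Hp as (Hb & Ha1 & Hb1 & Hin & Has & Hcn & Hfirst & Hlast & Hlf & Hrt).
           repeat split; try lra.
           ++ intros t' Ht'. rewrite Hlocs' by lra. auto.
           ++ intros H0. destruct (Rlt_dec s a) as [Hsa|Hsa].
              ** destruct (Hlf Hsa) as [y [Hy [_ Hy']]]. exists (a - L), y. repeat split; auto. lra.
                 intros t' Ht'. rewrite Hlocs' by lra. auto.
              ** assert (a = s) by lra. subst a. rewrite (Hfirst eq_refl) in *.
                 destruct (Hleft H0) as [a' [y [Ha' [Hy Hay]]]]. exists a', y; repeat split; auto.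
           ++ intros H0. destruct (Rlt_dec b e) as [Hbe|Hbe].
              ** destruct (Hrt Hbe) as [Hb2 [y [Hy [_ Hy']]]]. exists (b + L), y. repeat split; auto. lra.
                 intros t' Ht'. rewrite Hlocs' by lra. auto.
              ** assert (Hbe' : b = e) by lra. rewrite (Hlast Hbe'), Hl in *. rewrite Hbe' in *.
                 destruct (Hright H0) as [b' [y [Hb' [Hy Hby]]]]. exists b', y; repeat split; auto.
        -- destruct Hp as (Hb & Ha1 & Hab & Hb1 & Hxy & Hinx & Hiny & Hcn & Hpa & Hpb).
           repeat split; try lra; auto.
           ++ intros t' Ht'. rewrite Hlocs' by lra. auto.
           ++ exists (a - L). rewrite Hlocs' by lra. auto.
           ++ exists (b + L). rewrite Hlocs' by lra. auto.
    + rewrite (loc_S_edge n t Hlt).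
      destruct HI as (Ha & Hb & Hxy & Hcons & [s Hsa] & [e Hbe]).
      repeat split; try lra; auto.
      * intros t' Ht'. apply loc_S_edge; auto.
      * apply (@node_right_end n a x s a IH); [lra|exact Hsa].
      * apply (@node_left_end n b y b e IH); [lra|exact Hbe].
Qed.

End Constr.

Section Ends.
Context {V : Type} (E : V -> V -> Prop) (v0 : V) (f : V -> nat)
  (finj : forall u v, f u = f v -> u = v).

Notation X := (Xn v0 f).

Lemma maxnat (P : nat -> Prop) B : (forall k, P k -> (k < B)%nat) -> forall i, P i ->
  exists j, P j /\ forall k, P k -> (k <= j)%nat.
Proof. revert P; induction B as [|B IH]; intros P HB i Hi.
  - specialize (HB i Hi); lia.
  - destruct (classic (P B)) as [HPB|HPB].
    + exists B; split; auto. intros k Hk; specialize (HB k Hk); lia.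
    + refine (IH P _ i Hi). intros k Hk. specialize (HB k Hk).
      destruct (Nat.eq_dec k B). subst; contradiction. lia.
Qed.

Lemma chain_nth x l j d : chain E x l -> (j < length l)%nat -> E (nth j (x :: l) d) (nth (S j) (x :: l) d).
Proof. revert x j; induction l as [|a l IH]; intros x j Hc Hj; simpl in Hj. lia.
  destruct Hc as [Hxa Hc]. destruct j as [|j]. simpl; auto.
  specialize (IH a j Hc ltac:(lia)). simpl in IH |- *. auto. Qed.

Lemma last_nth (x : V) l : last l x = nth (length l) (x :: l) x.
Proof. revert x; induction l as [|a l IH]; intros x; auto.
  rewrite last_cons, IH. change (nth (length l) (a :: l) a = nth (length l) (a :: l) x).
  apply nth_indep. simpl; lia. Qed.

Section Seq.
Variable u : nat -> V.
Hypothesis Hu1 : forall n, ~ X n (u n).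
Hypothesis Hu2 : forall n, sc E (X n) (u n) (u (S n)).

Lemma nest n m y : (n <= m)%nat -> sc E (X m) (u m) y -> sc E (X n) (u n) y.
Proof. intros Hnm. induction Hnm as [|m Hnm IH]; auto.
  intros H. apply IH. eapply sc_trans. apply Hu2.
  eapply sc_mono; [|apply H]. intros; apply Xn_S; auto. Qed.

Definition pspec n (l : list V) : Prop :=
  chain E (u n) l /\ last l (u n) = u (S n) /\ l <> nil /\
  forall z, In z (u n :: l) -> sc E (X n) (u n) z.

Lemma pspec_ex n : exists l, pspec n l.
Proof.
  assert (Hgen : forall y, sc E (X n) (u n) y -> u n <> y -> exists l, chain E (u n) l /\ last l (u n) = y /\ l <> nil /\
      forall z, In z (u n :: l) -> sc E (X n) (u n) z).
  { intros y [H1 H2] Hne. destruct (reach_chain H1) as [l [Hc [Hl Hn]]].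
    exists l. split; [auto|split; [auto|split]].
    intros ->. simpl in Hl. auto.
    intros z0 Hz0. destruct (chain_reach E (X n) Hc Hn Hz0) as [A1 A2]. split; auto.
    rewrite Hl in A2. eapply reach_trans; eauto. }
  destruct (classic (u n = u (S n))) as [Heq|Hne].
  - set (m := Nat.max (S n) (S (f (u n)))).
    assert (Hm : sc E (X n) (u n) (u m)). { apply (nest (m := m)). lia. apply sc_refl; auto. }
    assert (Hne : u n <> u m). { intros Hx. apply (Hu1 (n:=m)). rewrite <- Hx. eapply Xn_mono; [|apply Xn_self]. lia. }
    destruct (Hgen _ Hm Hne) as [l1 [Hc1 [Hl1 [Hnil1 Hin1]]]].
    assert (Hm' : sc E (X n) (u m) (u n)) by (apply sc_sym; auto).
    destruct Hm' as [R1 _]. destruct (reach_chain R1) as [l2 [Hc2 [Hl2 Hn2]]].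
    exists (l1 ++ l2). split; [|split; [|split]].
    + apply chain_app; auto. rewrite Hl1; auto.
    + rewrite last_app, Hl1, Hl2; auto.
    + destruct l1; simpl; congruence.
    + intros z0 Hz. simpl in Hz. destruct Hz as [<-|Hz]. apply sc_refl; auto.
      apply in_app_or in Hz. destruct Hz as [Hz|Hz]. apply Hin1; simpl; auto.
      destruct (chain_reach E (X n) Hc2 Hn2 (or_intror Hz)) as [A1 A2]. rewrite Hl2 in A2.
      split; auto. eapply reach_trans; [apply Hm|]; auto.
  - apply Hgen; auto.
Qed.

Definition P n : list V := epsilon (inhabits nil) (pspec n).
Lemma P_spec n : pspec n (P n).
Proof. unfold P. apply epsilon_spec, pspec_ex. Qed.

Fixpoint pos (i : nat) : nat * nat :=
  match i with
  | O => (0%nat, 0%nat)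
  | S i' => let (n, j) := pos i' in
      if Nat.ltb (S j) (length (P n)) then (n, S j) else (S n, 0%nat)
  end.

Definition wk (i : nat) : V := let (n, j) := pos i in nth j (u n :: P n) (u n).

Lemma len_P n : (0 < length (P n))%nat.
Proof. destruct (P_spec n) as [_ [_ [H _]]]. destruct (P n); simpl; [congruence|lia]. Qed.

Lemma pos_inv i : (snd (pos i) < length (P (fst (pos i))))%nat.
Proof. induction i as [|i IH]; simpl. apply len_P.
  destruct (pos i) as [n j]. simpl in IH. destruct (Nat.ltb (S j) (length (P n))) eqn:H.
  apply Nat.ltb_lt in H. simpl; auto. simpl. apply len_P. Qed.

Lemma wk_edge i : E (wk i) (wk (S i)).
Proof. assert (Hi := pos_inv i). unfold wk. simpl. destruct (pos i) as [n j]. simpl in Hi.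
  destruct (P_spec n) as [Hc [Hl _]].
  destruct (Nat.ltb (S j) (length (P n))) eqn:H.
  - apply chain_nth; auto.
  - apply Nat.ltb_ge in H. assert (S j = length (P n)) by lia.
    rewrite <- Hl, last_nth, <- H0. simpl (nth 0 _ _). apply chain_nth; auto. Qed.

Lemma wk_sc i : sc E (X (fst (pos i))) (u (fst (pos i))) (wk i).
Proof. unfold wk. destruct (pos i) as [n j]. cbn [fst snd]. destruct (P_spec n) as [_ [_ [_ Hin]]].
  apply Hin. destruct (Nat.lt_ge_cases j (length (u n :: P n))).
  apply nth_In; auto. rewrite nth_overflow by auto. left; auto. Qed.

Lemma pos_mono i : (fst (pos i) <= fst (pos (S i)))%nat.
Proof. simpl. destruct (pos i) as [n j]. destruct (Nat.ltb _ _); simpl; lia. Qed.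

Lemma pos_mono' i k : (i <= k)%nat -> (fst (pos i) <= fst (pos k))%nat.
Proof. induction 1; auto. etransitivity; eauto. apply pos_mono. Qed.

Lemma pos_reach m : exists i, pos i = (m, 0%nat).
Proof. induction m as [|m [i Hi]]. exists 0%nat; auto.
  assert (Hk : forall k, (k < length (P m))%nat -> pos (i + k) = (m, k)).
  { induction k as [|k IH]; intros Hk. rewrite Nat.add_0_r; auto.
    rewrite Nat.add_succ_r. simpl. rewrite IH by lia.
    destruct (Nat.ltb (S k) (length (P m))) eqn:H; auto. apply Nat.ltb_ge in H. lia. }
  exists (S (i + (length (P m) - 1))). simpl. rewrite Hk by (assert (H := len_P m); lia).
  destruct (Nat.ltb _ _) eqn:H; auto. apply Nat.ltb_lt in H. assert (H' := len_P m). lia. Qed.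

Lemma level_tail m : exists K, forall i, (K <= i)%nat -> (m <= fst (pos i))%nat.
Proof. destruct (pos_reach m) as [K HK]. exists K. intros i Hi.
  assert (H := pos_mono' Hi). rewrite HK in H. simpl in H. auto. Qed.

Lemma wk_bound x : exists B, forall i, wk i = x -> (i < B)%nat.
Proof. destruct (level_tail (S (f x))) as [K HK]. exists K. intros i Hi.
  destruct (Nat.lt_ge_cases i K); auto. exfalso.
  assert (H1 := HK i H). assert (H2 := wk_sc i). rewrite Hi in H2.
  apply (sc_notX_r H2). eapply Xn_mono; [|apply Xn_self]. auto. Qed.

Lemma lastocc_ex i : exists j, wk j = wk i /\ forall k, wk k = wk i -> (k <= j)%nat.
Proof. destruct (wk_bound (wk i)) as [B HB]. exact (@maxnat (fun k => wk k = wk i) B HB i eq_refl). Qed.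

Definition lo (i : nat) : nat := proj1_sig (constructive_indefinite_description _ (lastocc_ex i)).
Lemma lo_spec i : wk (lo i) = wk i /\ forall k, wk k = wk i -> (k <= lo i)%nat.
Proof. unfold lo. destruct (constructive_indefinite_description _ _) as [j Hj]. simpl. auto. Qed.
Lemma lo_ge i : (i <= lo i)%nat.
Proof. apply (proj2 (lo_spec i)); auto. Qed.

Fixpoint pp (k : nat) : nat := match k with O => lo 0 | S k' => lo (S (pp k')) end.
Definition rr (k : nat) : V := wk (pp k).

Lemma pp_lt k : (pp k < pp (S k))%nat.
Proof. simpl. assert (H := lo_ge (S (pp k))). lia. Qed.
Lemma pp_mono k k' : (k < k')%nat -> (pp k < pp k')%nat.
Proof. induction 1. apply pp_lt. etransitivity; eauto. apply pp_lt. Qed.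
Lemma pp_ge k : (k <= pp k)%nat.
Proof. induction k. lia. assert (H := pp_lt k). lia. Qed.

Lemma pp_last k : forall i, wk i = rr k -> (i <= pp k)%nat.
Proof. intros i Hi. unfold rr in Hi. destruct k as [|k]; simpl in *.
  - destruct (lo_spec 0) as [A B]. apply B. congruence.
  - destruct (lo_spec (S (pp k))) as [A B]. apply B. congruence. Qed.

Lemma rr_ray : ray E rr.
Proof. split.
  - intros m n Hmn. destruct (Nat.lt_trichotomy m n) as [H|[H|H]]; auto; exfalso.
    + assert (H1 := pp_mono H). assert (H2 := pp_last m (pp n) (eq_sym Hmn)). lia.
    + assert (H1 := pp_mono H). assert (H2 := pp_last n (pp m) Hmn). lia.
  - intros k. unfold rr. simpl. destruct (lo_spec (S (pp k))) as [A _]. rewrite A. apply wk_edge.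
Qed.

Lemma rr_tail n : tail_in rr (sc E (X n) (u n)).
Proof. destruct (level_tail n) as [K HK]. exists K. intros k Hk.
  unfold rr. assert (H := wk_sc (pp k)). eapply nest; [|apply H]. apply HK.
  assert (H' := pp_ge k). lia. Qed.

Lemma rr_solid : solid_ray E rr.
Proof. split. apply rr_ray. intros Y HY. destruct (Xn_cover v0 f HY) as [n Hn].
  exists (sc E Y (u n)). split.
  - exists (u n). split. intros H; apply (Hu1 (n:=n)); auto. intros v; tauto.
  - destruct (rr_tail n) as [K HK]. exists K. intros k Hk. eapply sc_mono; [|apply HK; auto]. auto.
Qed.

Definition endof : (nat -> V) -> Prop := fun r => solid_ray E r /\ forall n, tail_in r (sc E (X n) (u n)).

Lemma tail_common (r1 r2 : nat -> V) (C1 C2 : V -> Prop) : tail_in r1 C1 -> tail_in r1 C2 -> exists z, C1 z /\ C2 z.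
Proof. intros [K1 H1] [K2 H2]. exists (r1 (Nat.max K1 K2)). split; [apply H1|apply H2]; lia. Qed.

Lemma tail_mono (r : nat -> V) (C1 C2 : V -> Prop) : (forall z, C1 z -> C2 z) -> tail_in r C1 -> tail_in r C2.
Proof. intros H [K HK]; exists K; auto. Qed.

Lemma scomp_sub Y (C : V -> Prop) n : (forall v, Y v -> X n v) -> is_scomp E Y C ->
  forall z, C z -> sc E (X n) (u n) z -> forall y, sc E (X n) (u n) y -> C y.
Proof. intros HY [c [Hc HC]] z Hz Hnz y Hy. apply HC. apply HC in Hz.
  eapply sc_trans; [apply Hz|]. eapply sc_mono; [apply HY|]. eapply sc_trans; [apply sc_sym, Hnz|]. auto. Qed.

Lemma endof_end : is_end E endof.
Proof. exists rr. split. apply rr_solid. intros r. split.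
  - intros [Hs Ht]. split; auto. intros Y HY. destruct (Xn_cover v0 f HY) as [n Hn].
    exists (sc E Y (u n)). split. exists (u n). split. intros H; apply (Hu1 (n:=n)); auto. intros; tauto.
    split; eapply tail_mono; try apply rr_tail; try apply Ht; intros z Hz; eapply sc_mono; eauto.
  - intros [Hs Heq]. split; auto. intros n.
    destruct (Heq (X n) (Xn_fin v0 f finj n)) as [C [HC [Ht1 Ht2]]].
    destruct (tail_common rr Ht1 (rr_tail n)) as [z [Hz1 Hz2]].
    eapply tail_mono; [|apply Ht2]. intros y Hy.
    destruct HC as [c [Hc HCc]]. apply HCc in Hy. apply HCc in Hz1.
    eapply sc_trans; [apply Hz2|]. eapply sc_trans; [apply sc_sym, Hz1|]. auto.
Qed.

Lemma endof_self : endof rr.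
Proof. split. apply rr_solid. apply rr_tail. Qed.

Lemma endof_lives Y n : (forall v, Y v -> X n v) -> lives E Y endof (sc E Y (u n)).
Proof. intros HY. split. exists (u n). split. intros H; apply (Hu1 (n:=n)); auto. intros; tauto.
  intros r [_ Ht]. eapply tail_mono; [|apply Ht]. intros z Hz. eapply sc_mono; eauto. Qed.

Lemma lives_sub Y C n : (forall v, Y v -> X n v) -> lives E Y endof C ->
  forall y, sc E (X n) (u n) y -> C y.
Proof. intros HY [HC Hr] y Hy. destruct (tail_common rr (Hr rr endof_self) (rr_tail n)) as [z [Hz1 Hz2]].
  eapply scomp_sub; eauto. Qed.

End Seq.
End Ends.

Section Alpha.
Context {V : Type} (E : V -> V -> Prop) (v0 : V) (f : V -> nat)
  (finj : forall u v, f u = f v -> u = v) (hsolid : solid E).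

Notation X := (Xn v0 f).
Notation lc := (loc E v0 f).

Lemma HI n : Inv E v0 f n.
Proof. apply Inv_all; auto. Qed.

Lemma loc_fixed n m t u s e : (n <= m)%nat -> lc n t = SNode u s e -> X n u -> lc m t = SNode u s e.
Proof. intros Hnm H Hx. induction Hnm as [|m Hnm IH]; auto.
  rewrite (loc_S_node E v0 f m t IH).
  destruct (excluded_middle_informative (X m u)) as [_|Hn]; auto.
  exfalso; apply Hn. eapply Xn_mono; eauto. Qed.

Lemma loc_edge_pers n m t x y a b : (n <= m)%nat -> lc n t = SEdge x y a b -> lc m t = SEdge x y a b.
Proof. intros Hnm H. induction Hnm as [|m Hnm IH]; auto. apply loc_S_edge; auto. Qed.

Lemma loc_prev n t u' s' e' : 0 <= t <= 1 -> lc (S n) t = SNode u' s' e' ->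
  exists u s e, lc n t = SNode u s e /\ s <= s' /\ e' <= e /\
    (~ X n u -> sc E (X n) u u') /\ (X n u -> u' = u /\ s' = s /\ e' = e).
Proof. intros Ht H. assert (HIt := @HI n t Ht).
  destruct (lc n t) as [u s e|x y a b] eqn:Hl.
  - exists u, s, e. split; auto. rewrite (loc_S_node E v0 f n t Hl) in H.
    destruct HIt as (Hs & He & Hse & Hcons & _).
    destruct (excluded_middle_informative (X n u)) as [Hx|Hx].
    + inversion H; subst. split; [lra|split; [lra|split]]. intros; contradiction. auto.
    + destruct (wl_spec finj hsolid Hx) as [Hc _].
      assert (HL := Lof_pos E v0 f n u Hse).
      assert (Hp := @pick_prop V E u (wl E v0 f n u) s (Lof E v0 f n u s e) t HL Hc).
      rewrite Lof_span in Hp. specialize (Hp ltac:(lra)). rewrite H in Hp.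
      destruct Hp as (Hb & Ha1 & Hb1 & Hin & _). split; [lra|split; [lra|split]].
      * intros _. apply wl_sc; auto.
      * intros; contradiction.
  - rewrite (loc_S_edge E v0 f n t Hl) in H. discriminate.
Qed.

Lemma loc_end_right n t u s e : 0 <= t <= 1 -> lc n t = SNode u s e ->
  forall m, (n <= m)%nat -> exists s', lc m e = SNode u s' e.
Proof. intros Ht H m Hm. assert (HIt := @HI n t Ht). rewrite H in HIt.
  destruct HIt as (Hs & He & Hse & Hcons & _).
  induction Hm as [|m Hm IH]. exists s; apply Hcons; lra.
  destruct IH as [s' Hs']. apply (node_right_end finj hsolid (HI m) (t := e) (s := s')); auto. lra. Qed.

Lemma loc_end_left n t u s e : 0 <= t <= 1 -> lc n t = SNode u s e ->
  forall m, (n <= m)%nat -> exists e', lc m s = SNode u s e'.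
Proof. intros Ht H m Hm. assert (HIt := @HI n t Ht). rewrite H in HIt.
  destruct HIt as (Hs & He & Hse & Hcons & _).
  induction Hm as [|m Hm IH]. exists e; apply Hcons; lra.
  destruct IH as [e' He']. apply (@node_left_end V E v0 f m s u s e' (HI m)); auto. lra. Qed.

Definition nodeu n t : V := match lc n t with SNode u _ _ => u | SEdge u _ _ _ => u end.
Definition isend t : Prop := forall n, exists u s e, lc n t = SNode u s e /\ ~ X n u.
Definition endp t := endof E v0 f (fun n => nodeu n t).

Lemma isend_nodeu t n : isend t -> exists s e, lc n t = SNode (nodeu n t) s e /\ ~ X n (nodeu n t).
Proof. intros H. destruct (H n) as [u [s [e [H1 H2]]]]. unfold nodeu. rewrite H1. eauto. Qed.

Lemma isend_seq t : 0 <= t <= 1 -> isend t ->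
  (forall n, ~ X n (nodeu n t)) /\ (forall n, sc E (X n) (nodeu n t) (nodeu (S n) t)).
Proof. intros Ht H. split.
  - intros n. destruct (isend_nodeu n H) as [s [e [_ Hx]]]; auto.
  - intros n. destruct (isend_nodeu (S n) H) as [s [e [H1 _]]].
    destruct (loc_prev n Ht H1) as [u [s0 [e0 [H2 [_ [_ [H3 _]]]]]]].
    destruct (isend_nodeu n H) as [s1 [e1 [H4 H5]]]. rewrite H4 in H2. inversion H2 as [Hu].
    rewrite <- Hu in H3. apply H3; auto. Qed.

Definition Rel t (p : @point V) : Prop :=
  (exists n u s e, lc n t = SNode u s e /\ X n u /\ p = PN (NV u)) \/
  (exists n x y a b, lc n t = SEdge x y a b /\ p = PI (NV x) (NV y) ((t - a) / (b - a))) \/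
  (isend t /\ p = PN (NE (endp t))).

Lemma Rel_total t : exists p, Rel t p.
Proof. destruct (classic (exists n u s e, lc n t = SNode u s e /\ X n u)) as [[n [u [s [e [H1 H2]]]]]|H].
  - exists (PN (NV u)). left; exists n, u, s, e; auto.
  - destruct (classic (exists n x y a b, lc n t = SEdge x y a b)) as [[n [x [y [a [b H1]]]]]|H'].
    + eexists. right; left. exists n, x, y, a, b; eauto.
    + exists (PN (NE (endp t))). right; right. split; auto. intros n.
      destruct (lc n t) as [u s e|x y a b] eqn:Hl.
      * exists u, s, e. split; auto. intros Hx. apply H; eauto 6.
      * exfalso; apply H'; eauto 6.
Qed.

Lemma Rel_func t p q : Rel t p -> Rel t q -> p = q.
Proof.
  intros [[n1 [u1 [s1 [e1 [H1 [X1 ->]]]]]]|[[n1 [x1 [y1 [a1 [b1 [H1 ->]]]]]]|[I1 ->]]]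
         [[n2 [u2 [s2 [e2 [H2 [X2 ->]]]]]]|[[n2 [x2 [y2 [a2 [b2 [H2 ->]]]]]]|[I2 ->]]].
  - assert (A1 := @loc_fixed n1 (Nat.max n1 n2) t _ _ _ ltac:(lia) H1 X1).
    assert (A2 := @loc_fixed n2 (Nat.max n1 n2) t _ _ _ ltac:(lia) H2 X2).
    rewrite A1 in A2. inversion A2; auto.
  - assert (A1 := @loc_fixed n1 (Nat.max n1 n2) t _ _ _ ltac:(lia) H1 X1).
    assert (A2 := @loc_edge_pers n2 (Nat.max n1 n2) t _ _ _ _ ltac:(lia) H2).
    rewrite A1 in A2. discriminate.
  - destruct (I2 n1) as [u [s [e [H3 H4]]]]. rewrite H1 in H3; inversion H3; subst; contradiction.
  - assert (A1 := @loc_fixed n2 (Nat.max n1 n2) t _ _ _ ltac:(lia) H2 X2).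
    assert (A2 := @loc_edge_pers n1 (Nat.max n1 n2) t _ _ _ _ ltac:(lia) H1).
    rewrite A1 in A2. discriminate.
  - assert (A1 := @loc_edge_pers n1 (Nat.max n1 n2) t _ _ _ _ ltac:(lia) H1).
    assert (A2 := @loc_edge_pers n2 (Nat.max n1 n2) t _ _ _ _ ltac:(lia) H2).
    rewrite A1 in A2. inversion A2; auto.
  - destruct (I2 n1) as [u [s [e [H3 H4]]]]. rewrite H1 in H3; discriminate.
  - destruct (I1 n2) as [u [s [e [H3 H4]]]]. rewrite H2 in H3; inversion H3; subst; contradiction.
  - destruct (I1 n2) as [u [s [e [H3 H4]]]]. rewrite H2 in H3; discriminate.
  - auto.
Qed.

Definition alpha (t : R) : @point V := epsilon (inhabits (PN (NV v0))) (Rel t).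

Lemma alpha_rel t p : Rel t p -> alpha t = p.
Proof. intros H. apply (Rel_func (t := t)); auto. unfold alpha. apply epsilon_spec.
  exists p; auto. Qed.

Lemma alpha_vertex t n u s e : lc n t = SNode u s e -> X n u -> alpha t = PN (NV u).
Proof. intros; apply alpha_rel; left; eauto 7. Qed.
Lemma alpha_edge t n x y a b : lc n t = SEdge x y a b -> alpha t = PI (NV x) (NV y) ((t - a) / (b - a)).
Proof. intros; apply alpha_rel; right; left; eauto 8. Qed.
Lemma alpha_end t : isend t -> alpha t = PN (NE (endp t)).
Proof. intros; apply alpha_rel; right; right; auto. Qed.

Lemma alpha_cases t : alpha t = alpha t /\ Rel t (alpha t).
Proof. split; auto. destruct (Rel_total t) as [p Hp]. rewrite (alpha_rel Hp). auto. Qed.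

Lemma endp_end t : 0 <= t <= 1 -> isend t -> is_end E (endp t).
Proof. intros Ht H. destruct (isend_seq Ht H) as [H1 H2]. apply endof_end; auto. Qed.

End Alpha.

Section Region.
Context {V : Type} (E : V -> V -> Prop) (v0 : V) (f : V -> nat)
  (finj : forall u v, f u = f v -> u = v) (hsolid : solid E).

Notation X := (Xn v0 f).
Notation lc := (loc E v0 f).
Notation alpha := (alpha E v0 f).

Lemma descend_node m t u s e : 0 <= t <= 1 -> lc m t = SNode u s e -> ~ X m u ->
  forall k, (m <= k)%nat -> forall y s' e', lc k t = SNode y s' e' -> sc E (X m) u y.
Proof. intros Ht Hm Hu k Hk. induction Hk as [|k Hk IH]; intros y s' e' Hy.
  - rewrite Hm in Hy. inversion Hy; subst. apply sc_refl; auto.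
  - destruct (loc_prev v0 f finj hsolid k Ht Hy) as [w [s0 [e0 [Hw [_ [_ [H1 H2]]]]]]].
    assert (Hmw := IH _ _ _ Hw).
    destruct (classic (X k w)) as [Hx|Hx].
    + destruct (H2 Hx) as [-> _]. auto.
    + eapply sc_trans; [apply Hmw|]. eapply sc_mono; [|apply H1; auto]. intros; eapply Xn_mono; eauto.
Qed.

Lemma descend_edge m t u s e : 0 <= t <= 1 -> lc m t = SNode u s e -> ~ X m u ->
  forall k, (m <= k)%nat -> forall x y a b, lc k t = SEdge x y a b -> sc E (X m) u x /\ sc E (X m) u y.
Proof. intros Ht Hm Hu k Hk. induction Hk as [|k Hk IH]; intros x y a b Hy.
  - rewrite Hm in Hy. discriminate.
  - destruct (lc k t) as [w s0 e0|x' y' a' b'] eqn:Hl.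
    + assert (Hmw := descend_node Ht Hm Hu Hk Hl).
      rewrite (loc_S_node E v0 f k t Hl) in Hy.
      destruct (excluded_middle_informative (X k w)) as [Hx|Hx]. discriminate.
      assert (HIt := @HI V E v0 f finj hsolid k t Ht). rewrite Hl in HIt.
      destruct HIt as (Hs & He & Hse & _).
      destruct (wl_spec finj hsolid Hx) as [Hc _].
      assert (HL := Lof_pos E v0 f k w Hse).
      assert (Hp := @pick_prop V E w (wl E v0 f k w) s0 (Lof E v0 f k w s0 e0) t HL Hc).
      rewrite Lof_span in Hp. specialize (Hp ltac:(lra)). rewrite Hy in Hp.
      destruct Hp as (_ & _ & _ & _ & _ & Hinx & Hiny & _).
      assert (Hmono : forall z, sc E (X k) w z -> sc E (X m) w z).
      { intros z; apply sc_mono. intros; eapply Xn_mono; eauto. }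
      split; eapply sc_trans; eauto; apply Hmono; apply wl_sc; auto.
    + rewrite (loc_S_edge E v0 f k t Hl) in Hy. inversion Hy; subst. eapply IH; eauto.
Qed.

Lemma region m t u s e : 0 <= t <= 1 -> lc m t = SNode u s e -> ~ X m u ->
  (exists y, alpha t = PN (NV y) /\ sc E (X m) u y) \/
  (exists x y r, alpha t = PI (NV x) (NV y) r /\ E x y /\ 0 < r < 1 /\ sc E (X m) u x /\ sc E (X m) u y) \/
  (isend E v0 f t /\ nodeu E v0 f m t = u /\ alpha t = PN (NE (endp E v0 f t))).
Proof. intros Ht Hm Hu. destruct (Rel_total E v0 f t) as [p Hp].
  assert (Ha := alpha_rel Hp).
  destruct Hp as [[n [y [s1 [e1 [H1 [H2 ->]]]]]]|[[n [x [y [a [b [H1 ->]]]]]]|[H1 ->]]].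
  - left. exists y. split; auto.
    destruct (Nat.le_gt_cases m n) as [Hmn|Hmn].
    + eapply descend_node; eauto.
    + assert (H3 := loc_fixed E (n := n) (m := m) t ltac:(lia) H1 H2). rewrite Hm in H3. inversion H3; subst. exfalso; apply Hu. eapply Xn_mono; [|apply H2]. lia.
  - right; left. exists x, y, ((t - a) / (b - a)). split; auto.
    assert (HIt := @HI V E v0 f finj hsolid n t Ht). rewrite H1 in HIt.
    destruct HIt as (Ha1 & Hb1 & Hxy & _).
    split; auto. split. split; [apply Rdiv_lt_0_compat|apply (Rmult_lt_reg_r (b - a)); [lra|]; unfold Rdiv; rewrite Rmult_assoc, Rinv_l]; lra.
    destruct (Nat.le_gt_cases m n) as [Hmn|Hmn].
    + eapply descend_edge; eauto.
    + assert (H3 := loc_edge_pers E v0 f (n := n) (m := m) t ltac:(lia) H1). rewrite Hm in H3. discriminate.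
  - right; right. split; auto. split; auto. unfold nodeu. rewrite Hm; auto.
Qed.

End Region.

Section Topo.
Context {V : Type} (E : V -> V -> Prop).

Definition near (al : R -> @point V) t (W : @point V -> Prop) : Prop :=
  exists d, 0 < d /\ forall t', 0 <= t' <= 1 -> Rabs (t' - t) < d -> W (al t').

Lemma near_forall al t (l : list (@point V -> Prop)) : Forall (fun W => near al t W) l ->
  near al t (fun p => Forall (fun W => W p) l).
Proof. induction 1 as [|W l [d1 [Hd1 H1]] _ [d2 [Hd2 H2]]].
  - exists 1. split. lra. intros; constructor.
  - exists (Rmin d1 d2). split. apply Rmin_pos; auto. intros t' Ht' Hd.
    constructor. apply H1; auto. eapply Rlt_le_trans; [apply Hd|apply Rmin_l].
    apply H2; auto. eapply Rlt_le_trans; [apply Hd|apply Rmin_r]. Qed.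

Lemma cont_from_near (al : R -> @point V) :
  (forall t, unit_interval t -> valid_point E (al t)) ->
  (forall t, unit_interval t -> forall W, subbase E W -> W (al t) -> near al t W) ->
  continuous_path E al.
Proof. intros Hv Hn. split; auto. intros U HU t Ht [_ HUt].
  destruct (HU (al t) (Hv t Ht) HUt) as [l [Hsub [Hin Himp]]].
  assert (Hf : Forall (fun W => near al t W) l).
  { rewrite Forall_forall in Hsub, Hin |- *. intros W HW. apply Hn; [exact Ht|apply Hsub; exact HW|apply Hin; exact HW]. }
  destruct (near_forall Hf) as [d [Hd Hd']]. exists d. split; [exact Hd|].
  intros s Hs Hst. split; [exact Hs|]. apply Himp. apply Hv; exact Hs. apply Hd'; [exact Hs|exact Hst]. Qed.

Lemma subbase_PN W p : subbase E W -> W (PN p) ->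
  (exists v eps, W = star E v eps /\ p = NV v /\ 0 < eps) \/
  (exists Y C eps, W = Chat E Y C eps /\ finite_set Y /\ node_in E Y C p /\ 0 < eps).
Proof. unfold subbase.
  intros [(v & eps & Heps & ->)|[(u & v & a & b & _ & _ & _ & ->)|[(Y & w & C & eps & HY & _ & _ & Heps & ->)|
    [(Y & w & w' & C1 & C2 & z & eps & _ & _ & _ & _ & _ & _ & _ & ->)|
    [(Y & v & w & C & z & eps & _ & _ & _ & _ & _ & _ & ->)|(Y & w & v & C & z & eps & _ & _ & _ & _ & _ & _ & ->)]]]]] Hp.
  - left. exists v, eps. split; auto. split; auto.
    destruct Hp as [H|[(y & r & H & _)|(x & r & H & _)]]; inversion H; auto.
  - destruct Hp as (r & H & _); discriminate.
  - right. exists Y, C, eps. repeat split; auto.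
    destruct Hp as [(n & H & Hn)|(x & y & r & H & _)]; [inversion H; subst; auto|discriminate].
  - destruct Hp as (x & y & r & H & _); discriminate.
  - destruct Hp as (y & r & H & _); discriminate.
  - destruct Hp as (x & r & H & _); discriminate.
Qed.

Lemma W_open_PI W p q r : subbase E W -> W (PI p q r) -> 0 < r < 1 ->
  exists eta, 0 < eta /\ forall r', Rabs (r' - r) < eta -> 0 < r' < 1 -> W (PI p q r').
Proof. unfold subbase.
  intros [(v & eps & Heps & ->)|[(u & v & a & b & _ & _ & _ & ->)|[(Y & w & C & eps & HY & _ & _ & Heps & ->)|
    [(Y & w & w' & C1 & C2 & z & eps & _ & _ & _ & _ & _ & _ & _ & ->)|
    [(Y & v & w & C & z & eps & _ & _ & _ & _ & _ & _ & ->)|(Y & w & v & C & z & eps & _ & _ & _ & _ & _ & _ & ->)]]]]] Hp Hr.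
  - destruct Hp as [H|[(y & r0 & H & Hd & Hr0)|(x & r0 & H & Hd & Hr0)]]; [discriminate| |];
      injection H; intros; subst.
    + exists (eps - r0). split. lra. intros r' H1 H2. right; left. exists y, r'. repeat split; auto; try lra.
      apply Rabs_def2 in H1. lra.
    + exists (r0 - (1 - eps)). split. lra. intros r' H1 H2. right; right. exists x, r'. repeat split; auto; try lra.
      apply Rabs_def2 in H1. lra.
  - destruct Hp as (r0 & H & Hr0). injection H; intros; subst.
    exists (Rmin (r0 - a) (b - r0)). split. apply Rmin_pos; lra.
    intros r' H1 H2. exists r'. split; auto. apply Rabs_def2 in H1.
    assert (Rmin (r0 - a) (b - r0) <= r0 - a) by apply Rmin_l.
    assert (Rmin (r0 - a) (b - r0) <= b - r0) by apply Rmin_r. lra.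
  - destruct Hp as [(n & H & _)|(x & y & r0 & H & Hd & Hr0 & Hc)]; [discriminate|]. injection H; intros; subst.
    destruct Hc as [Hc|[(H1 & H2 & H3)|(H1 & H2 & H3)]].
    + exists 1. split. lra. intros r' _ H2. right. exists x, y, r'. auto.
    + exists (eps - r0). split. lra. intros r' H4 H5. right. exists x, y, r'.
      split; [auto|split; [auto|split; [lra|]]].
      right; left. apply Rabs_def2 in H4. split; [auto|split; [auto|lra]].
    + exists (r0 - (1 - eps)). split. lra. intros r' H4 H5. right. exists x, y, r'.
      split; [auto|split; [auto|split; [lra|]]].
      right; right. apply Rabs_def2 in H4. split; [auto|split; [auto|lra]].
  - destruct Hp as (x & y & r0 & H & Hd & H1 & H2 & H3). injection H; intros; subst.
    exists (eps - Rabs (r0 - z)). split. lra. intros r' H4 H5. exists x, y, r'. repeat split; auto.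
    assert (Rabs (r' - z) <= Rabs (r' - r0) + Rabs (r0 - z)).
    { replace (r' - z) with ((r' - r0) + (r0 - z)) by ring. apply Rabs_triang. }
    lra.
  - destruct Hp as (y & r0 & H & Hd & H1 & H3). injection H; intros; subst.
    exists (eps - Rabs (r0 - z)). split. lra. intros r' H4 H5. exists y, r'. repeat split; auto.
    assert (Rabs (r' - z) <= Rabs (r' - r0) + Rabs (r0 - z)).
    { replace (r' - z) with ((r' - r0) + (r0 - z)) by ring. apply Rabs_triang. }
    lra.
  - destruct Hp as (x & r0 & H & Hd & H1 & H3). injection H; intros; subst.
    exists (eps - Rabs (r0 - z)). split. lra. intros r' H4 H5. exists x, r'. repeat split; auto.
    assert (Rabs (r' - z) <= Rabs (r' - r0) + Rabs (r0 - z)).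
    { replace (r' - z) with ((r' - r0) + (r0 - z)) by ring. apply Rabs_triang. }
    lra.
Qed.

Lemma frac_ok a b t : a < t < b -> 0 < (t - a) / (b - a) < 1.
Proof. intros H. set (r := (t - a) / (b - a)).
  assert (Hr : r * (b - a) = t - a) by (unfold r; field; lra). split; nra. Qed.

Lemma frac_gt a b t c : a < b -> b - c * (b - a) < t -> 1 - c < (t - a) / (b - a).
Proof. intros H1 H2. set (r := (t - a) / (b - a)).
  assert (Hr : r * (b - a) = t - a) by (unfold r; field; lra). nra. Qed.

Lemma frac_lt a b t c : a < b -> t < a + c * (b - a) -> (t - a) / (b - a) < c.
Proof. intros H1 H2. set (r := (t - a) / (b - a)).
  assert (Hr : r * (b - a) = t - a) by (unfold r; field; lra). nra. Qed.

End Topo.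

Section Near.
Context {V : Type} (E : V -> V -> Prop) (v0 : V) (f : V -> nat)
  (finj : forall u v, f u = f v -> u = v) (hsolid : solid E).

Notation X := (Xn v0 f).
Notation lc := (loc E v0 f).
Notation al := (alpha E v0 f).

Lemma HIt n t : 0 <= t <= 1 -> match lc n t with
  | SNode u s e => 0 <= s <= t /\ t <= e <= 1 /\ s < e /\
      (forall t', s <= t' <= e -> lc n t' = SNode u s e) /\
      (0 < s -> exists a y, a < s /\ E y u /\ forall t', a < t' < s -> lc n t' = SEdge y u a s) /\
      (e < 1 -> exists b y, e < b /\ E u y /\ forall t', e < t' < b -> lc n t' = SEdge u y e b)
  | SEdge x y a b => 0 <= a < t /\ t < b <= 1 /\ E x y /\
      (forall t', a < t' < b -> lc n t' = SEdge x y a b) /\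
      (exists s, lc n a = SNode x s a) /\ (exists e, lc n b = SNode y b e)
  end.
Proof. intros Ht. exact (@HI V E v0 f finj hsolid n t Ht). Qed.

Lemma vertex_near t n u s e eps : 0 <= t <= 1 -> lc n t = SNode u s e -> X n u -> 0 < eps ->
  exists d, 0 < d /\ forall t', 0 <= t' <= 1 -> Rabs (t' - t) < d ->
    al t' = PN (NV u) \/
    (exists y r, al t' = PI (NV u) (NV y) r /\ E u y /\ 0 < r < 1 /\ r < eps) \/
    (exists y r, al t' = PI (NV y) (NV u) r /\ E y u /\ 0 < r < 1 /\ 1 - eps < r).
Proof. intros Ht Hl Hx Heps. assert (H := HIt n Ht). rewrite Hl in H.
  destruct H as (Hs & He & Hse & Hcons & Hleft & Hright).
  set (c := Rmin eps 1). assert (Hc1 : 0 < c) by (apply Rmin_pos; lra).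
  assert (Hc2 : c <= eps) by apply Rmin_l. assert (Hc3 : c <= 1) by apply Rmin_r.
  assert (HL : exists dL, 0 < dL /\ forall t', 0 <= t' -> t' < s -> t - dL < t' ->
     exists y r, al t' = PI (NV y) (NV u) r /\ E y u /\ 0 < r < 1 /\ 1 - eps < r).
  { destruct (Rlt_dec 0 s) as [Hs0|Hs0].
    - destruct (Hleft Hs0) as [a [y [Ha [Hy Hay]]]].
      exists (t - s + c * (s - a)). split. nra. intros t' H1 H2 H3.
      assert (Ht' : a < t' < s) by nra.
      exists y, ((t' - a) / (s - a)). split. apply alpha_edge with (n := n). apply Hay; auto.
      split; auto. split. apply frac_ok; auto.
      assert (1 - c < (t' - a) / (s - a)) by (apply frac_gt; lra). lra.
    - exists 1. split. lra. intros; lra. }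
  assert (HR : exists dR, 0 < dR /\ forall t', t' <= 1 -> e < t' -> t' < t + dR ->
     exists y r, al t' = PI (NV u) (NV y) r /\ E u y /\ 0 < r < 1 /\ r < eps).
  { destruct (Rlt_dec e 1) as [He0|He0].
    - destruct (Hright He0) as [b [y [Hb [Hy Hby]]]].
      exists (e - t + c * (b - e)). split. nra. intros t' H1 H2 H3.
      assert (Ht' : e < t' < b) by nra.
      exists y, ((t' - e) / (b - e)). split. apply alpha_edge with (n := n). apply Hby; auto.
      split; auto. split. apply frac_ok; auto.
      assert ((t' - e) / (b - e) < c) by (apply frac_lt; lra). lra.
    - exists 1. split. lra. intros; lra. }
  destruct HL as [dL [HdL HL]]. destruct HR as [dR [HdR HR]].
  exists (Rmin dL dR). split. apply Rmin_pos; auto.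
  intros t' Ht' Hd. apply Rabs_def2 in Hd.
  assert (Rmin dL dR <= dL) by apply Rmin_l. assert (Rmin dL dR <= dR) by apply Rmin_r.
  destruct (Rlt_dec t' s) as [H1|H1].
  - right; right. apply HL; lra.
  - destruct (Rlt_dec e t') as [H2|H2].
    + right; left. apply HR; lra.
    + left. apply alpha_vertex with (n := n) (s := s) (e := e); auto. apply Hcons; lra.
Qed.

Lemma left_strict t N : 0 <= t <= 1 -> isend E v0 f t ->
  exists m s e, (N <= m)%nat /\ lc m t = SNode (nodeu E v0 f m t) s e /\ s < t.
Proof. intros Ht Hend. apply NNPP. intros Hno.
  assert (Hk : forall k, nodeu E v0 f (N + k) t = nodeu E v0 f N t).
  { induction k as [|k IH]. rewrite Nat.add_0_r; auto.
    destruct (isend_nodeu (N + k) Hend) as [s [e [H1 H2]]].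
    assert (H := HIt (N + k) Ht). rewrite H1 in H. destruct H as (Hs & He & Hse & _).
    assert (Hst : s = t). { apply Rle_antisym. lra. apply Rnot_lt_le. intros Hlt. apply Hno. exists (N + k)%nat, s, e. split. lia. split; auto. }
    rewrite <- IH. rewrite Nat.add_succ_r. unfold nodeu at 1.
    rewrite (loc_S_node E v0 f _ t H1).
    destruct (excluded_middle_informative _) as [Hx|Hx]; [contradiction|].
    subst s. rewrite pick_start. unfold nodeu; rewrite H1; auto. apply Lof_pos; auto. }
  set (k := S (f (nodeu E v0 f N t))).
  destruct (isend_nodeu (N + k) Hend) as [s [e [_ H2]]]. rewrite Hk in H2.
  apply H2. eapply Xn_mono; [|apply Xn_self]. unfold k; lia.
Qed.

Lemma right_strict t N : 0 <= t <= 1 -> isend E v0 f t ->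
  exists m s e, (N <= m)%nat /\ lc m t = SNode (nodeu E v0 f m t) s e /\ t < e.
Proof. intros Ht Hend. apply NNPP. intros Hno.
  assert (Hk : forall k, nodeu E v0 f (N + k) t = nodeu E v0 f N t).
  { induction k as [|k IH]. rewrite Nat.add_0_r; auto.
    destruct (isend_nodeu (N + k) Hend) as [s [e [H1 H2]]].
    assert (H := HIt (N + k) Ht). rewrite H1 in H. destruct H as (Hs & He & Hse & _).
    assert (Hst : e = t). { apply Rle_antisym. apply Rnot_lt_le. intros Hlt. apply Hno. exists (N + k)%nat, s, e. split. lia. split; auto. lra. }
    rewrite <- IH. rewrite Nat.add_succ_r. unfold nodeu at 1.
    rewrite (loc_S_node E v0 f _ t H1).
    destruct (excluded_middle_informative _) as [Hx|Hx]; [contradiction|].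
    destruct (wl_spec finj hsolid Hx) as [_ [Hl _]].
    rewrite pick_end. rewrite Hl. unfold nodeu; rewrite H1; auto. apply Lof_pos; auto.
    rewrite Lof_span; auto. }
  set (k := S (f (nodeu E v0 f N t))).
  destruct (isend_nodeu (N + k) Hend) as [s [e [_ H2]]]. rewrite Hk in H2.
  apply H2. eapply Xn_mono; [|apply Xn_self]. unfold k; lia.
Qed.

End Near.

Section Near2.
Context {V : Type} (E : V -> V -> Prop) (v0 : V) (f : V -> nat)
  (finj : forall u v, f u = f v -> u = v) (hsolid : solid E).

Notation X := (Xn v0 f).
Notation lc := (loc E v0 f).
Notation al := (alpha E v0 f).

Lemma end_near t Y C eps : 0 <= t <= 1 -> isend E v0 f t -> finite_set Y ->
  lives E Y (endp E v0 f t) C -> near al t (Chat E Y C eps).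
Proof. intros Ht Hend HY Hlv.
  destruct (isend_seq finj hsolid Ht Hend) as [Hu1 Hu2].
  destruct (Xn_cover v0 f HY) as [N HN].
  assert (HCs : forall y, sc E (X N) (nodeu E v0 f N t) y -> C y).
  { intros y Hy. exact (@lives_sub V E v0 f finj (fun n => nodeu E v0 f n t) Hu1 Hu2 Y C N HN Hlv y Hy). }
  assert (Hreg : forall m s e t', (N <= m)%nat -> 0 <= t' <= 1 -> lc m t' = SNode (nodeu E v0 f m t) s e ->
            Chat E Y C eps (al t')).
  { intros m s e t' Hm Ht' Hl.
    assert (Hin : forall y, sc E (X m) (nodeu E v0 f m t) y -> C y).
    { intros y Hy. apply HCs. exact (@nest V E v0 f (fun n => nodeu E v0 f n t) Hu2 N m y Hm Hy). }
    destruct (region finj hsolid Ht' Hl (Hu1 m)) as [(y & Hy & Hsy)|[(x & y & r & Hr & Hxy & Hr1 & Hsx & Hsy)|(Hend' & Hnu & Hal)]].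
    - rewrite Hy. left. exists (NV y). split; auto. simpl. apply Hin; auto.
    - rewrite Hr. right. exists (NV x), (NV y), r. split; auto. split. simpl; auto. split; auto.
      left. simpl. split; apply Hin; auto.
    - rewrite Hal. left. exists (NE (endp E v0 f t')). split; auto. simpl. split.
      apply (endp_end finj hsolid Ht' Hend').
      split. destruct Hlv as [Hsc _]; exact Hsc.
      intros r [_ Hr]. specialize (Hr m). simpl in Hr. rewrite Hnu in Hr.
      eapply tail_mono; [|exact Hr]. auto. }
  destruct (left_strict finj hsolid N Ht Hend) as [m1 [s1 [e1 [Hm1 [Hl1 Hs1]]]]].
  destruct (right_strict finj hsolid N Ht Hend) as [m2 [s2 [e2 [Hm2 [Hl2 He2]]]]].
  assert (H1 := HIt v0 f finj hsolid m1 Ht). rewrite Hl1 in H1. destruct H1 as (A1 & B1 & C1 & D1 & _).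
  assert (H2 := HIt v0 f finj hsolid m2 Ht). rewrite Hl2 in H2. destruct H2 as (A2 & B2 & C2 & D2 & _).
  exists (Rmin (t - s1) (e2 - t)). split. apply Rmin_pos; lra.
  intros t' Ht' Hd. apply Rabs_def2 in Hd.
  assert (Rmin (t - s1) (e2 - t) <= t - s1) by apply Rmin_l.
  assert (Rmin (t - s1) (e2 - t) <= e2 - t) by apply Rmin_r.
  destruct (Rle_dec t' t).
  - apply (Hreg m1 s1 e1); auto. apply D1; lra.
  - apply (Hreg m2 s2 e2); auto. apply D2; lra.
Qed.

Lemma edge_near t n x y a b W : 0 <= t <= 1 -> lc n t = SEdge x y a b -> subbase E W -> W (al t) -> near al t W.
Proof. intros Ht Hl HW Hw. assert (H := HIt v0 f finj hsolid n Ht). rewrite Hl in H.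
  destruct H as (Ha & Hb & Hxy & Hcons & _).
  rewrite (alpha_edge E v0 f t n Hl) in Hw.
  destruct (W_open_PI (NV x) (NV y) HW Hw (@frac_ok a b t ltac:(lra))) as [eta [Heta Hw']].
  exists (Rmin (Rmin (t - a) (b - t)) (eta * (b - a))). split.
  apply Rmin_pos. apply Rmin_pos; lra. nra.
  intros t' Ht' Hd. apply Rabs_def2 in Hd.
  assert (M1 := Rmin_l (Rmin (t - a) (b - t)) (eta * (b - a))).
  assert (M2 := Rmin_r (Rmin (t - a) (b - t)) (eta * (b - a))).
  assert (M3 := Rmin_l (t - a) (b - t)). assert (M4 := Rmin_r (t - a) (b - t)).
  rewrite (alpha_edge E v0 f t' n (Hcons t' ltac:(lra))).
  apply Hw'. 2: apply frac_ok; lra.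
  replace ((t' - a) / (b - a) - (t - a) / (b - a)) with ((t' - t) / (b - a)) by (field; lra).
  set (q := (t' - t) / (b - a)). assert (Hq : q * (b - a) = t' - t) by (unfold q; field; lra).
  apply Rabs_def1; nra.
Qed.

Lemma all_near t W : 0 <= t <= 1 -> subbase E W -> W (al t) -> near al t W.
Proof. intros Ht HW Hw. destruct (Rel_total E v0 f t) as [p Hp]. assert (Hal := alpha_rel Hp).
  destruct Hp as [[n [u [s [e [H1 [H2 ->]]]]]]|[[n [x [y [a [b [H1 ->]]]]]]|[H1 ->]]].
  - rewrite Hal in Hw. destruct (subbase_PN _ HW Hw) as [(v & eps & -> & Hv & Heps)|(Y & C & eps & -> & HY & Hn & Heps)].
    + injection Hv as <-.
      destruct (vertex_near finj hsolid Ht H1 H2 Heps) as [d [Hd Hd']]. exists d. split; auto.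
      intros t' Ht' Htt. destruct (Hd' t' Ht' Htt) as [Ha|[(y & r & Ha & Hy & Hr & Hr')|(y & r & Ha & Hy & Hr & Hr')]]; rewrite Ha.
      * left; auto.
      * right; left. exists (NV y), r. repeat split; auto; lra.
      * right; right. exists (NV y), r. repeat split; auto; lra.
    + simpl in Hn. destruct (vertex_near finj hsolid Ht H1 H2 Heps) as [d [Hd Hd']]. exists d. split; auto.
      intros t' Ht' Htt. destruct (Hd' t' Ht' Htt) as [Ha|[(y & r & Ha & Hy & Hr & Hr')|(y & r & Ha & Hy & Hr & Hr')]]; rewrite Ha.
      * left. exists (NV u); auto.
      * right. exists (NV u), (NV y), r. split; auto. split. simpl; auto. split; auto.
        destruct (classic (C y)). left; simpl; auto. right; left; simpl; auto.
      * right. exists (NV y), (NV u), r. split; auto. split. simpl; auto. split; auto.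
        destruct (classic (C y)). left; simpl; auto. right; right; simpl; auto.
  - eapply edge_near; eauto.
  - rewrite Hal in Hw. destruct (subbase_PN _ HW Hw) as [(v & eps & -> & Hv & Heps)|(Y & C & eps & -> & HY & Hn & Heps)].
    + discriminate.
    + destruct Hn as [_ Hlv]. apply end_near; auto.
Qed.

End Near2.

Section Final.
Context {V : Type} (E : V -> V -> Prop) (v0 : V) (f : V -> nat)
  (finj : forall u v, f u = f v -> u = v) (hsolid : solid E)
  (hsc : forall u v, reach E no_vertices u v).

Notation X := (Xn v0 f).
Notation lc := (loc E v0 f).
Notation al := (alpha E v0 f).

Lemma al_valid t : unit_interval t -> valid_point E (al t).
Proof. intros Ht. destruct (Rel_total E v0 f t) as [p Hp]. assert (Hal := alpha_rel Hp). rewrite Hal.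
  destruct Hp as [[n [u [s [e [H1 [H2 ->]]]]]]|[[n [x [y [a [b [H1 ->]]]]]]|[H1 ->]]].
  - simpl; auto.
  - assert (H := HIt v0 f finj hsolid n Ht). rewrite H1 in H. destruct H as (Ha & Hb & Hxy & _).
    simpl. split; auto. apply frac_ok; lra.
  - simpl. apply (endp_end finj hsolid Ht H1).
Qed.

Lemma al_cont : continuous_path E al.
Proof. apply cont_from_near. apply al_valid. intros t Ht W HW Hw. apply (all_near v0 f finj hsolid Ht HW Hw). Qed.

Lemma vertex_eventually n t u s e : 0 <= t <= 1 -> lc n t = SNode u s e -> al e = PN (NV u) /\ al s = PN (NV u).
Proof. intros Ht Hl. set (m := Nat.max n (S (f u))).
  assert (Hxm : X m u) by (eapply Xn_mono; [|apply Xn_self]; unfold m; lia).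
  split.
  - destruct (loc_end_right v0 f finj hsolid Ht Hl (m := m) ltac:(unfold m; lia)) as [s' Hs'].
    eapply alpha_vertex; eauto.
  - destruct (loc_end_left v0 f finj hsolid Ht Hl (m := m) ltac:(unfold m; lia)) as [e' He'].
    eapply alpha_vertex; eauto.
Qed.

Lemma al_directed : directed_top_path E al.
Proof. split. apply al_cont.
  intros t x y r Ht Hal0. destruct (Rel_total E v0 f t) as [p Hp]. assert (Hal := alpha_rel Hp).
  destruct Hp as [[n [u [s [e [H1 [H2 ->]]]]]]|[[n [x' [y' [a [b [H1 ->]]]]]]|[H1 ->]]];
    rewrite Hal in Hal0; try discriminate.
  injection Hal0 as <- <- _.
  assert (Ht' : 0 <= t <= 1) by lra.
  assert (H := HIt v0 f finj hsolid n Ht'). rewrite H1 in H.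
  destruct H as (Ha & Hb & Hxy & Hcons & [s Hsa] & [e Hbe]).
  assert (Ha01 : 0 <= a <= 1) by lra. assert (Hb01 : 0 <= b <= 1) by lra.
  assert (Hala : al a = PN (NV x')) by (apply (proj1 (@vertex_eventually n a x' s a Ha01 Hsa))).
  assert (Halb : al b = PN (NV y')) by (apply (proj2 (@vertex_eventually n b y' b e Hb01 Hbe))).
  assert (Hin : forall t', a < t' < b -> al t' = PI (NV x') (NV y') ((t' - a) / (b - a))).
  { intros t' Ht''. apply (alpha_edge E v0 f t' n). apply Hcons; auto. }
  exists a, b. split; [lra|]. split; [lra|]. split.
  - split; [|split; [|split; [|split]]].
    + intros t' Ht''. exists ((t' - a) / (b - a)). split. apply frac_ok; auto. auto.
    + intros s0 Hs0. exists (a + s0 * (b - a)). split. nra. rewrite Hin by nra. f_equal. field. lra.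
    + intros t1 t2 H1' H2' Heq. rewrite !Hin in Heq by auto. injection Heq as Heq.
      assert (Heq' : (t1 - a) / (b - a) * (b - a) = (t2 - a) / (b - a) * (b - a)) by (rewrite Heq; auto).
      field_simplify in Heq'; lra.
    + intros U HU t0 Ht0 [_ HUt]. cbv beta in Ht0. destruct al_cont as [_ Hc].
      assert (Hu0 : unit_interval t0) by (unfold unit_interval; lra).
      destruct (Hc U HU t0 Hu0 (conj Hu0 HUt)) as [d [Hd Hd']].
      exists (Rmin d (Rmin (t0 - a) (b - t0))). split. apply Rmin_pos; auto. apply Rmin_pos; lra.
      intros s0 Hs0 Hst. split; auto.
      assert (M1 := Rmin_l d (Rmin (t0 - a) (b - t0))). assert (M2 := Rmin_r d (Rmin (t0 - a) (b - t0))).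
      apply (Hd' s0). unfold unit_interval; lra. lra.
    + intros S0 HS. exists (fun p => exists t0, a < t0 < b /\ S0 t0 /\ al t0 = p). split.
      2: { intros s0 Hs0. split; intros (t0 & H3 & H4 & H5); exists t0; auto. }
      intros p Hvp (t0 & Ht0 & HSt & <-). cbv beta in Ht0.
      destruct (HS t0 Ht0 HSt) as [d [Hd Hd']].
      set (r0 := (t0 - a) / (b - a)). set (h := d / (b - a)).
      assert (Hh : 0 < h) by (unfold h; apply Rdiv_lt_0_compat; lra).
      assert (Hr0 : 0 < r0 < 1) by (apply frac_ok; auto).
      assert (L1 := Rmax_l 0 (r0 - h)). assert (L2 := Rmax_r 0 (r0 - h)).
      assert (L3 := Rmin_l 1 (r0 + h)). assert (L4 := Rmin_r 1 (r0 + h)).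
      assert (Hlo0 : Rmax 0 (r0 - h) < r0) by (apply Rmax_lub_lt; lra).
      assert (Hhi0 : r0 < Rmin 1 (r0 + h)) by (apply Rmin_glb_lt; lra).
      set (lo := Rmax 0 (r0 - h)) in *. set (hi := Rmin 1 (r0 + h)) in *.
      exists (edge_interval x' y' lo hi :: nil). split; [|split].
      * constructor; [|constructor]. right; left. exists x', y', lo, hi. repeat split; auto; lra.
      * constructor; [|constructor]. rewrite Hin by auto. exists r0. split; auto.
      * intros q Hq Hf. inversion Hf as [|? ? Hq' _]; subst. destruct Hq' as (r' & -> & Hr').
        exists (a + r' * (b - a)).
        assert (Hr'' : 0 < r' < 1) by lra.
        split. nra. split.
        -- apply Hd'. nra.
           assert (Hr'h : Rabs (r' - r0) < h). { apply Rabs_def1; lra. }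
           replace (a + r' * (b - a) - t0) with ((r' - r0) * (b - a)) by (unfold r0; field; lra).
           rewrite Rabs_mult, (Rabs_right (b - a)) by lra.
           unfold h in Hr'h. apply (Rmult_lt_compat_r (b - a)) in Hr'h; [|lra].
           unfold Rdiv in Hr'h. rewrite Rmult_assoc, Rinv_l in Hr'h by lra. lra.
        -- rewrite Hin by nra. f_equal. field. lra.
  - intros t1 t2 H1' H12 H2'.
    assert (Hco : forall t', a <= t' <= b -> edge_coord (NV x') (NV y') (al t') ((t' - a) / (b - a))).
    { intros t' Ht''. destruct (Req_dec t' a) as [->|Hna].
      - left. split; auto. unfold Rdiv. rewrite Rminus_diag. ring.
      - destruct (Req_dec t' b) as [->|Hnb].
        + right; left. split; auto. field. lra.
        + right; right. split. apply Hin; lra. apply frac_ok; lra. }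
    exists ((t1 - a) / (b - a)), ((t2 - a) / (b - a)). split. apply Hco; lra. split. apply Hco; lra.
    unfold Rdiv. apply Rmult_le_compat_r. left; apply Rinv_0_lt_compat; lra. lra.
Qed.

Lemma loc1_0 : lc 1 0 = SNode v0 0 (0 + Lof E v0 f 0 v0 0 1).
Proof. rewrite (loc_S_node E v0 f 0 0 (u := v0) (s := 0) (e := 1) eq_refl).
  destruct (excluded_middle_informative _) as [Hx|Hx]. exfalso; apply (Xn_0 Hx).
  apply pick_start. apply Lof_pos; lra. Qed.

Lemma loc1_1 : lc 1 1 = SNode v0 (1 - Lof E v0 f 0 v0 0 1) 1.
Proof. rewrite (loc_S_node E v0 f 0 1 (u := v0) (s := 0) (e := 1) eq_refl).
  destruct (excluded_middle_informative _) as [Hx|Hx]. exfalso; apply (Xn_0 Hx).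
  destruct (wl_spec finj hsolid Hx) as [_ [Hl _]].
  rewrite pick_end. rewrite Hl; auto. apply Lof_pos; lra. rewrite Lof_span; auto. Qed.

Lemma X1_v0 : X 1 v0.
Proof. split; auto. Qed.

Lemma al_closed : al 0 = al 1.
Proof. rewrite (alpha_vertex E 0 loc1_0 X1_v0), (alpha_vertex E 1 loc1_1 X1_v0). auto. Qed.

Lemma Cov n : (forall v, X n v -> exists t, 0 <= t <= 1 /\ exists s e, lc n t = SNode v s e) /\
  (forall v, ~ X n v -> exists t, 0 <= t <= 1 /\ exists u s e, lc n t = SNode u s e /\ ~ X n u /\ sc E (X n) u v).
Proof. induction n as [|n [IHa IHb]].
  - split. intros v Hv; exfalso; apply (Xn_0 Hv).
    intros v Hv. exists 0. split. lra. exists v0, 0, 1. split; auto. split. apply Xn_0.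
    split; apply reach_X0; auto.
  - assert (Hstep : forall t u s e z, 0 <= t <= 1 -> lc n t = SNode u s e -> ~ X n u -> In z (u :: wl E v0 f n u) ->
        exists t', 0 <= t' <= 1 /\ exists a b, lc (S n) t' = SNode z a b).
    { intros t u s e z Ht Hl Hu Hz.
      assert (H := HIt v0 f finj hsolid n Ht). rewrite Hl in H. destruct H as (Hs & He & Hse & Hcons & _).
      destruct (pick_cov s (Lof_pos E v0 f n u Hse) Hz) as [t' [Ht' [a [b Hp]]]].
      rewrite Lof_span in Ht'. exists t'. split. lra. exists a, b.
      rewrite (loc_S_node E v0 f n t' (Hcons t' Ht')).
      destruct (excluded_middle_informative _); [contradiction|auto]. }
    split.
    + intros v Hv. destruct (classic (X n v)) as [Hx|Hx].
      * destruct (IHa v Hx) as [t [Ht [s [e Hl]]]]. exists t. split; auto. exists s, e.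
        apply (loc_fixed E (n := n) (m := S n) t ltac:(lia) Hl Hx).
      * destruct (IHb v Hx) as [t [Ht [u [s [e [Hl [Hu Hsc]]]]]]].
        destruct (wl_spec finj hsolid Hu) as (_ & _ & _ & H4 & _).
        apply (Hstep t u s e v Ht Hl Hu). apply H4; auto.
    + intros v Hv. assert (Hx : ~ X n v) by (intros H; apply Hv; apply Xn_S; auto).
      destruct (IHb v Hx) as [t [Ht [u [s [e [Hl [Hu Hsc]]]]]]].
      destruct (wl_spec finj hsolid Hu) as (_ & _ & _ & _ & H5).
      destruct (H5 v Hv Hsc) as [z [Hz Hzv]].
      destruct (Hstep t u s e z Ht Hl Hu Hz) as [t' [Ht' [a [b Hl']]]].
      exists t'. split; auto. exists z, a, b. split; auto. split; auto. eapply sc_notX_l; eauto.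
Qed.

Lemma al_cover v : exists t, 0 <= t <= 1 /\ al t = PN (NV v).
Proof. destruct (proj1 (Cov (S (f v))) v (Xn_self v0 f v)) as [t [Ht [s [e Hl]]]].
  exists t. split; auto. eapply alpha_vertex; eauto. apply Xn_self. Qed.

End Final.

Section Conv.
Context {V : Type} (E : V -> V -> Prop) (no_loops : forall v, ~ E v v) (u0 : V).

Notation nv := (@no_vertices V).
Definition Aset (x : V) : Prop := reach E nv u0 x.

Lemma A_closed x y : Aset x -> E x y -> Aset y.
Proof. intros Hx Hxy. eapply reach_trans; eauto. apply reach_edge; auto. Qed.

Lemma A_sc x y : Aset x -> sc E nv x y -> Aset y.
Proof. intros Hx [H _]. eapply reach_trans; eauto. Qed.

Definition inA (n : @node V) : Prop :=
  match n with NV x => Aset x | NE w => exists C, lives E nv w C /\ forall c, C c -> Aset c end.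

Definition PA (p : @point V) : Prop :=
  match p with PN n => inA n | PI x _ _ => inA x end.

Lemma scomp_same X (C C' : V -> Prop) z : is_scomp E X C -> is_scomp E X C' -> C z -> C' z ->
  forall y, C y -> C' y.
Proof. intros [c [Hc HC]] [c' [Hc' HC']] Hz Hz' y Hy. apply HC'. apply HC in Hy. apply HC in Hz. apply HC' in Hz'.
  eapply sc_trans; [apply Hz'|]. eapply sc_trans; [apply sc_sym, Hz|]. auto. Qed.

Lemma scomp_nonempty X C : is_scomp E X C -> exists c, C c.
Proof. intros [c [Hc HC]]. exists c. apply HC. apply sc_refl; auto. Qed.

Lemma tails_common (r : nat -> V) (C1 C2 : V -> Prop) : tail_in r C1 -> tail_in r C2 -> exists z, C1 z /\ C2 z.
Proof. intros [K1 H1] [K2 H2]. exists (r (Nat.max K1 K2)). split; [apply H1|apply H2]; lia. Qed.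

Lemma end_ray w : is_end E w -> exists r, w r.
Proof. intros [r0 [Hs Hw]]. exists r0. apply Hw. split; auto. intros X HX.
  destruct (proj2 Hs X HX) as [C [HC Ht]]. exists C; auto. Qed.

Lemma end_lives w X : is_end E w -> finite_set X -> exists C, lives E X w C.
Proof. intros Hw HX. destruct Hw as [r0 [Hs Hw]].
  destruct (proj2 Hs X HX) as [C [HC Ht]]. exists C. split; auto.
  intros r Hr. apply Hw in Hr. destruct Hr as [_ Heq].
  destruct (Heq X HX) as [C' [HC' [Ht1 Ht2]]].
  destruct (tails_common Ht Ht1) as [z [Hz Hz']].
  destruct Ht2 as [K HK]. exists K. intros n Hn. eapply scomp_same; [exact HC'|exact HC|exact Hz'|exact Hz|]. auto. Qed.

Lemma lives_same w X C C' : is_end E w -> lives E X w C -> lives E X w C' -> forall y, C y -> C' y.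
Proof. intros Hw [HC Ht] [HC' Ht'] y Hy. destruct (end_ray Hw) as [r Hr].
  destruct (tails_common (Ht r Hr) (Ht' r Hr)) as [z [Hz Hz']]. apply (@scomp_same X C C' z HC HC' Hz Hz' y Hy). Qed.

Lemma inA_end_iff w C0 : is_end E w -> lives E nv w C0 -> (inA (NE w) <-> exists c, C0 c /\ Aset c).
Proof. intros Hw Hl. split.
  - intros [C [HlC HC]]. destruct (scomp_nonempty (proj1 HlC)) as [c Hc]. exists c. split; auto.
    eapply lives_same; eauto.
  - intros [c [Hc Ha]]. exists C0. split; auto. intros c' Hc'.
    destruct Hl as [[c0 [Hc0 HC0]] _]. apply HC0 in Hc. apply HC0 in Hc'.
    eapply A_sc; eauto. eapply sc_trans; [apply sc_sym, Hc|]. auto. Qed.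

Lemma inA_end_all w C0 : is_end E w -> lives E nv w C0 -> inA (NE w) -> forall c, C0 c -> Aset c.
Proof. intros Hw Hl HA c Hc. destruct ((proj1 (inA_end_iff Hw Hl)) HA) as [c' [Hc' Ha]].
  destruct Hl as [[c0 [Hc0 HC0]] _]. apply HC0 in Hc. apply HC0 in Hc'.
  eapply A_sc; eauto. eapply sc_trans; [apply sc_sym, Hc'|]. auto. Qed.

Lemma inA_end_none w C0 : is_end E w -> lives E nv w C0 -> ~ inA (NE w) -> forall c, C0 c -> ~ Aset c.
Proof. intros Hw Hl HA c Hc Ha. apply HA. apply (proj2 (inA_end_iff Hw Hl)). eauto. Qed.

Definition C0 (w : (nat -> V) -> Prop) : V -> Prop := epsilon (inhabits (fun _ => False)) (fun C => lives E nv w C).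

Lemma nv_fin : finite_set nv.
Proof. exists nil. intros v []. Qed.

Lemma C0_spec w : is_end E w -> lives E nv w (C0 w).
Proof. intros Hw. unfold C0. apply epsilon_spec. apply end_lives; auto. apply nv_fin. Qed.

Definition Nd (n : @node V) : @point V -> Prop :=
  match n with NV a => star E a 2 | NE w => Chat E nv (C0 w) 2 end.

Lemma subbase_openD W : subbase E W -> openD E W.
Proof. intros HW p Hp HWp. exists (W :: nil). split. constructor; auto. split. constructor; auto.
  intros q _ Hq. inversion Hq; auto. Qed.

Lemma Nd_open n : valid_node E n -> openD E (Nd n).
Proof. intros Hn. apply subbase_openD. destruct n as [a|w]; simpl.
  - left. exists a, 2. split; auto; lra.
  - right; right; left. exists nv, w, (C0 w), 2.
    split; [apply nv_fin|split; [exact Hn|split; [apply C0_spec; exact Hn|split; [lra|reflexivity]]]].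
Qed.

Definition nd (p : @point V) : @node V := match p with PN n => n | PI x _ _ => x end.

Lemma PA_nd p : PA p = inA (nd p).
Proof. destruct p; auto. Qed.

Lemma Nd_mem p : valid_point E p -> Nd (nd p) p.
Proof. destruct p as [n|x y r]; simpl.
  - destruct n as [a|w]; simpl; intros Hv.
    + left; auto.
    + left. exists (NE w). split; auto. simpl. split; auto. apply C0_spec; auto.
  - intros [Hd Hr]. destruct x as [a|w]; simpl.
    + right; left. exists y, r. repeat split; auto; lra.
    + right. exists (NE w), y, r. split; auto. split; auto. split; auto.
      assert (Hw : is_end E w) by (destruct y; simpl in Hd; tauto).
      assert (Hx : node_in E nv (C0 w) (NE w)) by (simpl; split; auto; apply C0_spec; auto).
      destruct (classic (node_in E nv (C0 w) y)). left; auto. right; left. split; [exact Hx|split; [assumption|lra]].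
Qed.

Lemma node_in_A w n : is_end E w -> inA (NE w) -> node_in E nv (C0 w) n -> inA n.
Proof. intros Hw HA Hn. assert (Hall := inA_end_all Hw (C0_spec Hw) HA).
  destruct n as [c|w']; simpl in *; auto.
  destruct Hn as [Hw' Hl]. exists (C0 w). split; auto. Qed.

Lemma node_in_notA w n : is_end E w -> ~ inA (NE w) -> node_in E nv (C0 w) n -> ~ inA n.
Proof. intros Hw HA Hn. assert (Hnone := inA_end_none Hw (C0_spec Hw) HA).
  destruct n as [c|w']; simpl in *; auto.
  destruct Hn as [Hw' Hl]. intros HA'. destruct ((proj1 (inA_end_iff Hw' Hl)) HA') as [c [Hc Ha]].
  apply (Hnone c Hc Ha). Qed.

Lemma Nd_A n : valid_node E n -> inA n -> forall q, valid_point E q -> Nd n q ->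
  PA q \/ exists y z r, q = PI y z r /\ ~ Nd n (PN y).
Proof. intros Hn HA q Hq HN. destruct n as [a|w]; simpl in HN.
  - destruct HN as [->|[(y & r & -> & _)|(x & r & -> & Hd & _)]].
    + left; auto.
    + left; auto.
    + right. exists x, (NV a), r. split; auto. simpl. intros [H|[(y & r' & H & _)|(y & r' & H & _)]]; try discriminate.
      injection H as ->. exact (no_loops Hd).
  - simpl in Hn. destruct HN as [(m & -> & Hm)|(x & y & r & -> & Hd & Hr & Hc)].
    + left. simpl. eapply node_in_A; eauto.
    + destruct Hc as [(H1 & _)|[(H1 & _)|(H1 & H2 & _)]].
      * left. simpl. eapply node_in_A; eauto.
      * left. simpl. eapply node_in_A; eauto.
      * right. exists x, y, r. split; auto. simpl. intros [(m & H & Hm)|(x' & y' & r' & H & _)]; [|discriminate].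
        injection H as ->. auto.
Qed.

Lemma Nd_B n : valid_node E n -> ~ inA n -> forall q, valid_point E q -> Nd n q -> ~ PA q.
Proof. intros Hn HA q Hq HN. destruct n as [a|w]; simpl in HN.
  - destruct HN as [->|[(y & r & -> & _)|(x & r & -> & Hd & _)]]; simpl; auto.
    destruct x as [b|eta]; simpl in *.
    + intros Hb; apply HA. eapply A_closed; eauto.
    + destruct Hd as [Heta Hlim]. intros HAe.
      assert (Hall := inA_end_all Heta (C0_spec Heta) HAe).
      destruct (Hlim nv nv_fin (C0 eta) (C0_spec Heta)) as [c [Hc Hca]].
      intros Hca'; apply HA, Hall; auto.
      apply HA. eapply A_closed; eauto.
  - simpl in Hn. destruct HN as [(m & -> & Hm)|(x & y & r & -> & Hd & Hr & Hc)].
    + simpl. eapply node_in_notA; eauto.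
    + simpl. destruct Hc as [(H1 & _)|[(H1 & _)|(H1 & H2 & _)]].
      * eapply node_in_notA; eauto.
      * eapply node_in_notA; eauto.
      * assert (Hny := @node_in_notA w y Hn HA H2).
        assert (Hnone := inA_end_none Hn (C0_spec Hn) HA).
        destruct x as [b|eta]; destruct y as [c|w'']; simpl in Hd, H1, H2, Hny |- *.
        -- intros Hb. apply Hny. eapply A_closed; eauto.
        -- destruct Hd as [Hw'' Hlim]. destruct H2 as [_ Hl''].
           destruct (Hlim nv nv_fin (C0 w) Hl'' H1) as [c [Hc Hbc]].
           intros Hb. apply (Hnone c Hc). eapply A_closed; eauto.
        -- destruct Hd as [Heta Hlim]. intros HAe.
           assert (Hall := inA_end_all Heta (C0_spec Heta) HAe).
           destruct (Hlim nv nv_fin (C0 eta) (C0_spec Heta)) as [c' [Hc' Hcc]].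
           intros Hc''. apply (Hnone c H2). apply Hall; auto.
           apply (Hnone c H2). eapply A_closed; [apply Hall; eauto|eauto].
        -- destruct Hd as [Heta [Hw'' [_ Hlim]]]. destruct H2 as [_ Hl'']. intros HAe.
           assert (Hall := inA_end_all Heta (C0_spec Heta) HAe).
           destruct (Hlim nv nv_fin (C0 eta) (C0 w) (C0_spec Heta) Hl'') as [a [c [Ha [Hc Hac]]]].
           intros Hss. destruct (scomp_nonempty (proj1 (C0_spec Heta))) as [c0 Hc0].
           apply (Hnone c0). apply Hss; auto. apply Hall; auto.
           apply (Hnone c Hc). eapply A_closed; [apply Hall; eauto|eauto].
Qed.

End Conv.

Section Conv2.
Context {V : Type} (E : V -> V -> Prop) (no_loops : forall v, ~ E v v) (u0 : V)
  (al : R -> @point V) (Hdir : directed_top_path E al).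

Notation PA := (PA E u0).

Lemma al_valid' t : 0 <= t <= 1 -> valid_point E (al t).
Proof. intros Ht. apply (proj1 (proj1 Hdir)). exact Ht. Qed.

Lemma valid_nd p : valid_point E p -> valid_node E (nd p).
Proof. destruct p as [n|x y r]; simpl; auto. intros [Hd _].
  destruct x as [a|w]; simpl; auto. destruct y; simpl in Hd; tauto. Qed.

Lemma dedge_neq x y : dedge E x y -> x <> y.
Proof. intros Hd ->. destruct y as [a|w]; simpl in Hd. exact (no_loops Hd). tauto. Qed.

Lemma ec_func (x y : @node V) p c c' : x <> y -> edge_coord x y p c -> edge_coord x y p c' -> c = c'.
Proof. intros Hxy [(H1 & H2)|[(H1 & H2)|(H1 & H2)]] [(H3 & H4)|[(H3 & H4)|(H3 & H4)]]; subst;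
  try congruence; try (injection H3; intros; congruence).
Qed.

Lemma dir_tail t' y z r : 0 < t' < 1 -> al t' = PI y z r ->
  exists a', 0 <= a' < t' /\ al a' = PN y /\ forall s, a' < s < t' -> exists c, al s = PI y z c.
Proof. intros Ht' Hal. destruct (proj2 Hdir t' y z r Ht' Hal) as [a [b [Ha [Hb [Hh Ho]]]]].
  destruct Hh as (H1 & H2 & _).
  assert (Hv := al_valid' (t := t') ltac:(lra)). rewrite Hal in Hv. destruct Hv as [Hd _].
  assert (Hyz := dedge_neq Hd).
  exists a. split; [lra|]. split.
  - destruct (Ho a a ltac:(lra) ltac:(lra) ltac:(lra)) as [c1 [_ [Hc1 [_ _]]]].
    destruct Hc1 as [(Hp & _)|Hc1]; auto. exfalso.
    assert (Hc1pos : 0 < c1 <= 1) by (destruct Hc1 as [(_ & ->)|(_ & Hc)]; lra).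
    destruct (H2 (c1 / 2) ltac:(lra)) as [t'' [Ht'' Hal'']].
    destruct (Ho a t'' ltac:(lra) ltac:(lra) ltac:(lra)) as [c1' [c2' [Hc1' [Hc2' Hle]]]].
    rewrite Hal'' in Hc2'.
    assert (Ec2 : c2' = c1 / 2) by (apply (ec_func Hyz Hc2'); right; right; split; auto; lra).
    assert (Ec1 : c1' = c1) by (apply (ec_func Hyz Hc1'); right; auto).
    lra.
  - intros s Hs. destruct (H1 s ltac:(lra)) as [c [_ Hc]]. eauto.
Qed.

Lemma FL t : 0 <= t < 1 -> PA (al t) -> exists d, 0 < d /\ forall t', t <= t' < t + d -> t' < 1 -> PA (al t').
Proof. intros Ht HA.
  destruct (classic (0 < t /\ exists x y r, al t = PI x y r)) as [[Ht0 (x & y & r & Hal)]|Hno].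
  - destruct (proj2 Hdir t x y r ltac:(lra) Hal) as [a [b [Ha [Hb [Hh _]]]]].
    destruct Hh as (H1 & _).
    exists (b - t). split. lra. intros t' Ht' Ht1.
    destruct (Req_dec t' t) as [->|Hne]; auto.
    destruct (H1 t' ltac:(lra)) as [c [_ Hc]]. rewrite Hc. rewrite Hal in HA. exact HA.
  - set (n := nd (al t)).
    assert (Hv := al_valid' (t := t) ltac:(lra)).
    assert (HN := Nd_open E _ (@valid_nd _ Hv)). assert (Hm := Nd_mem E _ Hv).
    assert (Hu : unit_interval t) by (unfold unit_interval; lra).
    destruct (proj2 (proj1 Hdir) (Nd E n) HN t Hu (conj Hu Hm)) as [d [Hd Hd']].
    exists d. split; auto. intros t' Ht' Ht1.
    destruct (Req_dec t' t) as [->|Hne]; auto.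
    assert (Hv' := al_valid' (t := t') ltac:(lra)).
    assert (Hu' : unit_interval t') by (unfold unit_interval; lra).
    assert (Hr' : Rabs (t' - t) < d) by (apply Rabs_def1; lra).
    destruct (Hd' t' Hu' Hr') as [_ HN'].
    rewrite PA_nd in HA.
    destruct (Nd_A E no_loops u0 _ (@valid_nd _ Hv) HA _ Hv' HN') as [HP|(y & z & r & Hq & HnN)]; auto.
    exfalso. destruct (dir_tail (t' := t') ltac:(lra) Hq) as [a' [Ha' [Hala' Hs]]].
    destruct (Rlt_dec a' t) as [Hlt|Hge].
    + destruct (Hs t ltac:(lra)) as [c Hc]. apply Hno. split. lra. eauto.
    + assert (Hua : unit_interval a') by (unfold unit_interval; lra).
      assert (Hra : Rabs (a' - t) < d) by (apply Rabs_def1; lra).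
      destruct (Hd' a' Hua Hra) as [_ HN''].
      rewrite Hala' in HN''. contradiction.
Qed.

Lemma BL t : 0 <= t <= 1 -> ~ PA (al t) -> exists d, 0 < d /\ forall t', 0 <= t' <= 1 -> Rabs (t' - t) < d -> ~ PA (al t').
Proof. intros Ht HA. set (n := nd (al t)).
  assert (Hv := al_valid' Ht).
  assert (HN := Nd_open E _ (@valid_nd _ Hv)). assert (Hm := Nd_mem E _ Hv).
  destruct (proj2 (proj1 Hdir) (Nd E n) HN t Ht (conj Ht Hm)) as [d [Hd Hd']].
  exists d. split; auto. intros t' Ht' Htt.
  destruct (Hd' t' Ht' Htt) as [_ HN'].
  rewrite PA_nd in HA.
  apply (Nd_B E u0 _ (@valid_nd _ Hv) HA _ (al_valid' Ht') HN').
Qed.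

Lemma claim t1 t2 : 0 <= t1 <= t2 -> t2 <= 1 -> PA (al t1) -> ~ PA (al t2) -> False.
Proof. intros H12 H2 HA1 HA2.
  set (T := fun s => t1 <= s <= t2 /\ forall s', t1 <= s' <= s -> PA (al s')).
  assert (Hb : bound T) by (exists t2; intros s [Hs _]; lra).
  assert (Hne : exists x, T x).
  { exists t1. split. lra. intros s' Hs'. replace s' with t1 by lra. auto. }
  destruct (completeness T Hb Hne) as [m [Hub Hlub]].
  assert (Hm1 : t1 <= m) by (apply Hub; destruct Hne as [x Hx]; split; [lra|]; intros s' Hs'; replace s' with t1 by lra; auto).
  assert (Hm2 : m <= t2) by (apply Hlub; intros s [Hs _]; lra).
  assert (Hpre : forall s', t1 <= s' < m -> PA (al s')).
  { intros s' Hs'. apply NNPP. intros Hn.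
    assert (Hup : is_upper_bound T s').
    { intros s [Hs Hs2]. destruct (Rle_dec s s') as [Hle|Hgt]; auto.
      exfalso. apply Hn. apply Hs2. lra. }
    specialize (Hlub s' Hup). lra. }
  destruct (classic (PA (al m))) as [HAm|HAm].
  - assert (Hmt2 : m < t2). { destruct (Req_dec m t2) as [->|]; [contradiction|lra]. }
    destruct (FL (t := m) ltac:(lra) HAm) as [d [Hd Hd']].
    set (s := m + Rmin d (t2 - m) / 2).
    assert (M1 := Rmin_l d (t2 - m)). assert (M2 := Rmin_r d (t2 - m)).
    assert (Hpos : 0 < Rmin d (t2 - m)) by (apply Rmin_pos; lra).
    assert (HTs : T s).
    { split. unfold s; lra. intros s' Hs'. destruct (Rlt_dec s' m). apply Hpre; lra.
      apply Hd'; unfold s in *; lra. }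
    assert (Hsm := Hub s HTs). unfold s in Hsm. lra.
  - assert (Hmt1 : t1 < m). { destruct (Req_dec m t1) as [->|]; [contradiction|lra]. }
    destruct (BL (t := m) ltac:(lra) HAm) as [d [Hd Hd']].
    assert (M1 := Rmax_l t1 (m - d / 2)). assert (M2 := Rmax_r t1 (m - d / 2)).
    assert (Hs'm : Rmax t1 (m - d / 2) < m) by (apply Rmax_lub_lt; lra).
    set (s' := Rmax t1 (m - d / 2)) in *.
    apply (Hd' s'). lra. apply Rabs_def1; lra. apply Hpre; lra.
Qed.

End Conv2.

Lemma converse {V : Type} (E : V -> V -> Prop) (no_loops : forall v, ~ E v v) (al : R -> @point V) :
  directed_top_path E al -> al 0 = al 1 -> (forall v : V, exists t, 0 <= t <= 1 /\ al t = PN (NV v)) ->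
  strongly_connected E.
Proof. intros Hdir Hcl Hcov. split.
  - assert (Hv := al_valid' Hdir (t := 0) ltac:(lra)).
    destruct (al 0) as [[a|w]|x y r]; simpl in Hv.
    + exists a; auto.
    + destruct (end_ray Hv) as [r Hr]. exists (r 0%nat); auto.
    + destruct Hv as [Hd _]. destruct x as [a|w]. exists a; auto.
      assert (Hw : is_end E w) by (destruct y; simpl in Hd; tauto).
      destruct (end_ray Hw) as [r0 Hr0]. exists (r0 0%nat); auto.
  - intros u v. apply NNPP. intros Huv.
    destruct (Hcov u) as [tu [Htu Halu]]. destruct (Hcov v) as [tv [Htv Halv]].
    assert (HAu : PA E u (al tu)) by (rewrite Halu; simpl; unfold Aset; constructor; intros []).
    assert (HAv : ~ PA E u (al tv)) by (rewrite Halv; simpl; unfold Aset; auto).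
    destruct (Rle_dec tu tv) as [Hle|Hgt].
    + apply (claim no_loops u Hdir (t1 := tu) (t2 := tv)); auto; lra.
    + destruct (classic (PA E u (al 1))) as [H1|H1].
      * apply (claim no_loops u Hdir (t1 := 0) (t2 := tv)); auto; try lra. rewrite Hcl; auto.
      * apply (claim no_loops u Hdir (t1 := tu) (t2 := 1)); auto; lra.
Qed.

Theorem theorem4 (V : Type) (E : V -> V -> Prop)
  (no_loops : forall v, ~ E v v)
  (hcount : @countable_vertices V)
  (hsolid : solid E) :
  strongly_connected E <->
  exists alpha : R -> @point V,
    directed_top_path E alpha /\ closed_path alpha /\
    forall v : V, exists t, 0 <= t <= 1 /\ alpha t = PN (NV v).
Proof. split.
  - intros [[v0 _] hsc]. destruct hcount as [f finj]. exists (alpha E v0 f). split.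
    apply al_directed; auto. split. unfold closed_path. apply al_closed; auto.
    intros v. apply al_cover; auto.
  - intros [al [Hd [Hc Hcov]]]. apply (converse no_loops Hd Hc Hcov).
Qed.
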